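(* Let $\lambda_1,\lambda_2>0$, $u^*>0$, $\varepsilon>0$ and $\beta>\frac{\varepsilon}{4(1+\varepsilon)}$. Consider the planar system $$\dot\eta_1=u^*-u-\phi_2(\eta_2),\qquad \dot\eta_2=u^*-u+\phi_1(\eta_1)$$ under the feedback law $u=u^*+\beta\big(\phi_1(\eta_1)+(1+\varepsilon)\phi_2(\eta_2)\big)$. Then the equilibrium $\eta=0$ of the closed-loop system is globally asymptotically stable and locally exponentially stable, and along every closed-loop solution the control signal $u(t)$ is bounded (but not necessarily positive). Moreover, if $r>0$ is such that the sublevel set $\Omega=\{\eta\in\mathbb R^2: V_1(\eta)\le r\}$ is contained in $$\mathcal D_0=\{\eta\in\mathbb R^2:\ u^*+\beta(\phi_1(\eta_1)+(1+\varepsilon)\phi_2(\eta_2))>0\},$$ then $u(t)>0$ for all $t\ge0$ for every solution with $\eta(0)\in\Omega$.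
   Context: $\phi_1(\eta_1)=\frac1{\lambda_1}(1-e^{-\eta_1})$, $\phi_2(\eta_2)=\lambda_2(e^{\eta_2}-1)$, $\Phi_1(\eta_1)=\frac1{\lambda_1}(e^{-\eta_1}-1+\eta_1)$, $\Phi_2(\eta_2)=\lambda_2(e^{\eta_2}-1-\eta_2)$, and $V_1(\eta)=\Phi_1(\eta_1)+(1+\varepsilon)\Phi_2(\eta_2)$. *)

(* Defs.v *)
From Stdlib Require Import Reals.
From Coquelicot Require Import Coquelicot.
Open Scope R_scope.

Definition phi1 (l1 x : R) : R := / l1 * (1 - exp (- x)).
Definition phi2 (l2 x : R) : R := l2 * (exp x - 1).
Definition Phi1 (l1 x : R) : R := / l1 * (exp (- x) - 1 + x).
Definition Phi2 (l2 x : R) : R := l2 * (exp x - 1 - x).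
Definition V1 (l1 l2 eps x1 x2 : R) : R := Phi1 l1 x1 + (1 + eps) * Phi2 l2 x2.

Definition ufb (l1 l2 us eps beta x1 x2 : R) : R :=
  us + beta * (phi1 l1 x1 + (1 + eps) * phi2 l2 x2).

Definition f1 (l1 l2 us eps beta x1 x2 : R) : R :=
  us - ufb l1 l2 us eps beta x1 x2 - phi2 l2 x2.
Definition f2 (l1 l2 us eps beta x1 x2 : R) : R :=
  us - ufb l1 l2 us eps beta x1 x2 + phi1 l1 x1.

Definition norm2 (x1 x2 : R) : R := sqrt (x1 ^ 2 + x2 ^ 2).

Definition is_solution (l1 l2 us eps beta : R) (e1 e2 : R -> R) : Prop :=
  (forall t, 0 < t ->
     is_derive e1 t (f1 l1 l2 us eps beta (e1 t) (e2 t)) /\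
     is_derive e2 t (f2 l1 l2 us eps beta (e1 t) (e2 t))) /\
  filterlim e1 (at_right 0) (locally (e1 0)) /\
  filterlim e2 (at_right 0) (locally (e2 0)).

Definition GAS (l1 l2 us eps beta : R) : Prop :=
  (forall a b : R, exists e1 e2 : R -> R,
     is_solution l1 l2 us eps beta e1 e2 /\ e1 0 = a /\ e2 0 = b) /\
  (forall r, 0 < r -> exists d, 0 < d /\
     forall e1 e2, is_solution l1 l2 us eps beta e1 e2 ->
       norm2 (e1 0) (e2 0) < d -> forall t, 0 <= t -> norm2 (e1 t) (e2 t) < r) /\
  (forall e1 e2, is_solution l1 l2 us eps beta e1 e2 ->
     is_lim (fun t => norm2 (e1 t) (e2 t)) p_infty 0).

Definition LES (l1 l2 us eps beta : R) : Prop :=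
  exists d k a, 0 < d /\ 0 < k /\ 0 < a /\
    forall e1 e2, is_solution l1 l2 us eps beta e1 e2 ->
      norm2 (e1 0) (e2 0) < d -> forall t, 0 <= t ->
        norm2 (e1 t) (e2 t) <= k * norm2 (e1 0) (e2 0) * exp (- a * t).

(* Main.v *)
Require Import Defs.
From Stdlib Require Import Reals Lra Psatz Factorial Classical.
From Coquelicot Require Import Coquelicot.
Open Scope R_scope.

Definition CE (g : R -> R) (x : R) : Prop :=
  forall eps, 0 < eps -> exists d, 0 < d /\ forall s, Rabs (s - x) < d -> Rabs (g s - g x) < eps.

Definition RC (g : R -> R) : Prop :=
  forall eps, 0 < eps -> exists d, 0 < d /\ forall s, 0 < s < d -> Rabs (g s - g 0) < eps.

Lemma CE_of_cont g x : continuous g x -> CE g x.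
Proof.
  intros H. apply continuity_pt_filterlim in H.
  intros eps Heps. destruct (H eps Heps) as [d [Hd Hd']].
  exists d; split; auto. intros s Hs.
  destruct (Req_dec s x) as [->|Hne].
  - rewrite Rminus_eq_0, Rabs_R0; auto.
  - apply (Hd' s). split. split; [exact I| auto]. exact Hs.
Qed.

Lemma cont_of_CE g x : CE g x -> continuous g x.
Proof.
  intros H. apply continuity_pt_filterlim.
  intros eps Heps. destruct (H eps Heps) as [d [Hd Hd']].
  exists d; split; auto. intros s [_ Hs]. apply Hd'. exact Hs.
Qed.

Lemma CE_of_derive g x l : is_derive g x l -> CE g x.
Proof.
  intros H. apply CE_of_cont. apply (ex_derive_continuous (V := R_NormedModule)). exists l; exact H.
Qed.

Lemma RC_of_filterlim g : filterlim g (at_right 0) (locally (g 0)) -> RC g.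
Proof.
  intros H eps Heps. apply filterlim_locally with (eps := mkposreal eps Heps) in H.
  destruct H as [d Hd]. exists d; split; [apply cond_pos|].
  intros s [Hs1 Hs2]. apply (Hd s).
  - unfold ball; simpl; unfold AbsRing_ball, abs, minus, plus, opp; simpl.
    rewrite Rabs_right; lra.
  - exact Hs1.
Qed.

Lemma filterlim_of_RC g : RC g -> filterlim g (at_right 0) (locally (g 0)).
Proof.
  intros H. apply filterlim_locally. intros [eps Heps].
  destruct (H eps Heps) as [d [Hd Hd']].
  exists (mkposreal d Hd). intros s Hs Hs0. simpl in *.
  unfold ball in Hs |- *; simpl in *; unfold AbsRing_ball, abs, minus, plus, opp in *; simpl in *.
  apply Hd'. rewrite Rabs_right in Hs; lra.
Qed.

Lemma mvt_closed (g dg : R -> R) a b :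
  a <= b -> (forall s, a <= s <= b -> is_derive g s (dg s)) ->
  exists c, a <= c <= b /\ g b - g a = dg c * (b - a).
Proof.
  intros Hab Hd.
  destruct (MVT_gen g a b dg) as [c [Hc Heq]].
  - intros x Hx. rewrite Rmin_left, Rmax_right in Hx by lra. apply Hd; lra.
  - intros x Hx. rewrite Rmin_left, Rmax_right in Hx by lra.
    apply continuity_pt_filterlim. apply (ex_derive_continuous (V := R_NormedModule)). exists (dg x). apply Hd; lra.
  - rewrite Rmin_left, Rmax_right in Hc by lra. exists c; split; auto.
Qed.

Lemma mono_closed (g dg : R -> R) a b :
  a <= b -> (forall s, a <= s <= b -> is_derive g s (dg s)) ->
  (forall s, a <= s <= b -> 0 <= dg s) -> g a <= g b.
Proof.
  intros Hab Hd Hpos. destruct (mvt_closed g dg a b Hab Hd) as [c [Hc Heq]].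
  assert (0 <= dg c * (b - a)) by (apply Rmult_le_pos; [apply Hpos; lra| lra]). lra.
Qed.

Lemma mvt_bound (g dg : R -> R) u v C :
  (forall s, Rmin u v <= s <= Rmax u v -> is_derive g s (dg s)) ->
  (forall s, Rmin u v <= s <= Rmax u v -> Rabs (dg s) <= C) ->
  Rabs (g v - g u) <= C * Rabs (v - u).
Proof.
  intros Hd Hb. destruct (Rle_dec u v) as [Huv|Huv].
  - rewrite Rmin_left, Rmax_right in Hd, Hb by lra.
    destruct (mvt_closed g dg u v Huv Hd) as [c [Hc ->]].
    rewrite Rabs_mult. apply Rmult_le_compat_r; [apply Rabs_pos| apply Hb; lra].
  - rewrite Rmin_right, Rmax_left in Hd, Hb by lra.
    destruct (mvt_closed g dg v u ltac:(lra) Hd) as [c [Hc Heq]].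
    replace (g v - g u) with (- (g u - g v)) by ring. rewrite Rabs_Ropp, Heq.
    replace (v - u) with (- (u - v)) by ring. rewrite Rabs_Ropp, Rabs_mult.
    apply Rmult_le_compat_r; [apply Rabs_pos| apply Hb; lra].
Qed.

Lemma mono_open (g dg : R -> R) :
  (forall t, 0 < t -> is_derive g t (dg t)) -> (forall t, 0 < t -> dg t <= 0) ->
  RC g -> forall t, 0 <= t -> g t <= g 0.
Proof.
  intros Hd Hneg Hrc t Ht.
  assert (Hst : forall s, 0 < s <= t -> g t <= g s).
  { intros s Hs. assert (- g s <= - g t).
    { apply (mono_closed (fun x => - g x) (fun x => - dg x) s t); [lra| |].
      - intros x Hx. apply (is_derive_opp g x (dg x)). apply Hd; lra.
      - intros x Hx. assert (dg x <= 0) by (apply Hneg; lra). lra. }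
    lra. }
  destruct (Rle_or_lt (g t) (g 0)) as [H|H]; auto.
  destruct (Hrc (g t - g 0) ltac:(lra)) as [d [Hd0 Hd']].
  destruct (Req_dec t 0) as [->|Ht0]; [lra|].
  set (s := Rmin t (d/2)).
  assert (Hs : 0 < s <= t) by (unfold s; apply Rmin_case_strong; lra).
  assert (Hs2 : s < d) by (unfold s; apply Rmin_case_strong; lra).
  specialize (Hd' s ltac:(lra)). specialize (Hst s Hs).
  apply Rabs_def2 in Hd'. lra.
Qed.

Lemma exp_le_exp x y : x <= y -> exp x <= exp y.
Proof. intros H. destruct (Req_dec x y) as [->|Hn]; [lra|]. left. apply exp_increasing. lra. Qed.

Lemma Rabs_le_inv x y : Rabs x <= y -> -y <= x <= y.
Proof. unfold Rabs; destruct Rcase_abs; lra. Qed.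

Lemma exp_ge1 x : 0 <= x -> 1 <= exp x.
Proof. intros H. rewrite <- exp_0 at 1. apply exp_le_exp; lra. Qed.
Lemma exp_le1 x : x <= 0 -> exp x <= 1.
Proof. intros H. rewrite <- exp_0. apply exp_le_exp; lra. Qed.

Lemma exp_half y : exp y = exp (y/2) * exp (y/2).
Proof. rewrite <- exp_plus. f_equal. field. Qed.

Lemma h_nonneg y : 0 <= exp y - 1 - y.
Proof. pose proof (exp_ineq1_le y). lra. Qed.

Lemma h_quad_low y : -2 <= y -> y^2/4 <= exp y - 1 - y.
Proof.
  intros H. rewrite exp_half. pose proof (exp_ineq1_le (y/2)).
  assert (0 <= 1 + y/2) by lra. nra.
Qed.

Lemma h_lin y : Rabs y - 1 <= exp y - 1 - y.
Proof.
  destruct (Rle_or_lt 0 y).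
  - rewrite Rabs_right by lra. pose proof (h_quad_low y ltac:(lra)).
    assert (0 <= (y/2 - 1)^2) by (apply pow2_ge_0). nra.
  - rewrite Rabs_left by lra. pose proof (exp_pos y). lra.
Qed.

Lemma h_min y : Rmin (y^2) 1 / 4 <= exp y - 1 - y.
Proof.
  destruct (Rle_or_lt (-2) y).
  - pose proof (h_quad_low y H). pose proof (Rmin_l (y^2) 1). lra.
  - pose proof (h_lin y). rewrite Rabs_left in H0 by lra. pose proof (Rmin_r (y^2) 1). lra.
Qed.

Lemma h_quad_up y : Rabs y <= 1 -> exp y - 1 - y <= exp 1 * y^2.
Proof.
  intros Hy. pose proof (exp_ineq1_le (-y)) as H1.
  assert (He : exp y * exp (-y) = 1) by (rewrite <- exp_plus; replace (y + - y) with 0 by ring; apply exp_0).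
  pose proof (exp_pos y). pose proof (exp_pos (-y)).
  assert (Hk : exp y - 1 <= y * exp y) by nra.
  assert (Hle : exp y <= exp 1) by (apply exp_le_exp; apply Rabs_le_inv in Hy; lra).
  assert (H1e : 1 <= exp 1) by (first [apply exp_ge1 | apply exp_le1]; lra).
  pose proof (exp_ineq1_le y).
  destruct (Rle_or_lt 0 y).
  - assert (exp y - 1 - y <= y * (exp y - 1)) by nra.
    assert (y * (exp y - 1) <= y * (y * exp y)) by (apply Rmult_le_compat_l; lra).
    assert (y*y*exp y <= y*y*exp 1) by (apply Rmult_le_compat_l; nra). nra.
  - assert (exp y - 1 - y <= y * (exp y - 1)) by nra.
    assert (y * (exp y - 1) <= y * y) by nra. nra.
Qed.

Lemma em1_low y : Rabs y <= 1 -> Rabs y * exp (-1) <= Rabs (exp y - 1).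
Proof.
  intros Hy. apply Rabs_le_inv in Hy.
  pose proof (exp_ineq1_le y). pose proof (exp_ineq1_le (-y)).
  assert (He1 : exp (-1) <= 1) by (first [apply exp_ge1 | apply exp_le1]; lra).
  pose proof (exp_pos (-1)).
  destruct (Rle_or_lt 0 y).
  - rewrite !Rabs_right by lra. nra.
  - rewrite Rabs_left by lra. assert (exp y <= 1) by (apply exp_le1; lra). rewrite Rabs_left1 by lra.
    assert (He : exp y * exp (-y) = 1) by (rewrite <- exp_plus; replace (y + - y) with 0 by ring; apply exp_0).
    assert (exp (-1) <= exp y) by (apply exp_le_exp; lra).
    assert (1 - exp y = exp y * (exp (-y) - 1)) by nra.
    nra.
Qed.

Lemma em1_far r y : 0 < r -> r <= Rabs y -> 1 - exp (- r) <= Rabs (exp y - 1).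
Proof.
  intros Hr Hy. pose proof (exp_ineq1_le (-r)). pose proof (exp_ineq1_le y).
  destruct (Rle_or_lt 0 y).
  - rewrite Rabs_right in Hy by lra. rewrite Rabs_right by lra. lra.
  - rewrite Rabs_left in Hy by lra.
    assert (exp y <= exp (-r)) by (apply exp_le_exp; lra).
    rewrite Rabs_left1 by (assert (exp y <= 1) by (first [apply exp_ge1 | apply exp_le1]; lra); lra). lra.
Qed.

Lemma exp_lip u v B : Rabs u <= B -> Rabs v <= B -> Rabs (exp u - exp v) <= exp B * Rabs (u - v).
Proof.
  assert (key : forall u v, v <= u -> u <= B -> Rabs (exp u - exp v) <= exp B * Rabs (u - v)).
  { intros p q Hqp HpB.
    assert (Hx : exp p = exp q * exp (p - q)) by (rewrite <- exp_plus; f_equal; ring).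
    pose proof (exp_ineq1_le (-(p-q))).
    assert (He : exp (p-q) * exp (-(p-q)) = 1) by (rewrite <- exp_plus; replace (p - q + - (p - q)) with 0 by ring; apply exp_0).
    pose proof (exp_pos (p-q)). pose proof (exp_pos q). pose proof (exp_pos (-(p-q))).
    assert (exp (p-q) - 1 <= (p - q) * exp (p-q)) by nra.
    assert (exp p <= exp B) by (apply exp_le_exp; lra).
    assert (1 <= exp (p - q)) by (first [apply exp_ge1 | apply exp_le1]; lra).
    rewrite Rabs_right by nra. rewrite (Rabs_right (p - q)) by lra.
    assert (exp p - exp q = exp q * (exp (p-q) - 1)) by nra.
    assert (exp q * (exp (p-q) - 1) <= exp q * ((p - q) * exp (p-q))) by (apply Rmult_le_compat_l; lra).
    assert (exp q * ((p - q) * exp (p-q)) = (p-q) * exp p) by nra.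
    assert ((p-q) * exp p <= (p-q) * exp B) by (apply Rmult_le_compat_l; lra). nra. }
  intros Hu Hv. apply Rabs_le_inv in Hu. apply Rabs_le_inv in Hv.
  destruct (Rle_or_lt v u).
  - apply key; lra.
  - rewrite Rabs_minus_sym, (Rabs_minus_sym u). apply key; lra.
Qed.

Definition cl (M x : R) : R := Rmax (- M) (Rmin M x).

Lemma cl_lip M x y : 0 <= M -> Rabs (cl M x - cl M y) <= Rabs (x - y).
Proof. intros HM. unfold cl, Rmax, Rmin. repeat destruct Rle_dec; unfold Rabs; repeat destruct Rcase_abs; lra. Qed.

Lemma cl_bnd M x : 0 <= M -> Rabs (cl M x) <= M.
Proof. intros HM. unfold cl, Rmax, Rmin. repeat destruct Rle_dec; unfold Rabs; repeat destruct Rcase_abs; lra. Qed.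

Lemma cl_id M x : Rabs x <= M -> cl M x = x.
Proof. intros HM. apply Rabs_le_inv in HM. unfold cl, Rmax, Rmin. repeat destruct Rle_dec; lra. Qed.

Lemma cl_edge M x : 0 <= M -> M < Rabs x -> Rabs (cl M x) = M.
Proof. intros HM H. unfold cl, Rmax, Rmin in *. unfold Rabs in *. repeat destruct Rle_dec; repeat destruct Rcase_abs; lra. Qed.

Definition BL (f : R -> R -> R) : Prop :=
  exists L B, 0 <= L /\
   (forall x1 x2 y1 y2, Rabs (f x1 x2 - f y1 y2) <= L * (Rabs (x1 - y1) + Rabs (x2 - y2))) /\
   (forall x1 x2, Rabs (f x1 x2) <= B).

Lemma BL_const c : BL (fun _ _ => c).
Proof. exists 0, (Rabs c). split; [lra|split]; intros; auto. rewrite Rminus_eq_0, Rabs_R0.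
  pose proof (Rabs_pos (x1 - y1)); pose proof (Rabs_pos (x2 - y2)). nra. apply Rle_refl. Qed.

Lemma BL_plus f g : BL f -> BL g -> BL (fun x1 x2 => f x1 x2 + g x1 x2).
Proof.
  intros [L1 [B1 [HL1 [Hl1 Hb1]]]] [L2 [B2 [HL2 [Hl2 Hb2]]]].
  exists (L1 + L2), (B1 + B2). split; [lra|split]; intros.
  - specialize (Hl1 x1 x2 y1 y2). specialize (Hl2 x1 x2 y1 y2).
    replace (f x1 x2 + g x1 x2 - (f y1 y2 + g y1 y2)) with ((f x1 x2 - f y1 y2) + (g x1 x2 - g y1 y2)) by ring.
    eapply Rle_trans; [apply Rabs_triang|]. lra.
  - eapply Rle_trans; [apply Rabs_triang|]. specialize (Hb1 x1 x2); specialize (Hb2 x1 x2); lra.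
Qed.

Lemma BL_opp f : BL f -> BL (fun x1 x2 => - f x1 x2).
Proof.
  intros [L1 [B1 [HL1 [Hl1 Hb1]]]]. exists L1, B1. split; [lra|split]; intros.
  - replace (- f x1 x2 - - f y1 y2) with (- (f x1 x2 - f y1 y2)) by ring. rewrite Rabs_Ropp. auto.
  - rewrite Rabs_Ropp; auto.
Qed.

Lemma BL_minus f g : BL f -> BL g -> BL (fun x1 x2 => f x1 x2 - g x1 x2).
Proof. intros Hf Hg. apply (BL_plus f (fun x1 x2 => - g x1 x2) Hf (BL_opp g Hg)). Qed.

Lemma BL_mult f g : BL f -> BL g -> BL (fun x1 x2 => f x1 x2 * g x1 x2).
Proof.
  intros [L1 [B1 [HL1 [Hl1 Hb1]]]] [L2 [B2 [HL2 [Hl2 Hb2]]]].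
  assert (HB1 : 0 <= B1) by (eapply Rle_trans; [apply Rabs_pos| apply (Hb1 0 0)]).
  assert (HB2 : 0 <= B2) by (eapply Rle_trans; [apply Rabs_pos| apply (Hb2 0 0)]).
  exists (L1 * B2 + B1 * L2), (B1 * B2). split; [nra|split]; intros.
  - replace (f x1 x2 * g x1 x2 - f y1 y2 * g y1 y2) with ((f x1 x2 - f y1 y2) * g x1 x2 + f y1 y2 * (g x1 x2 - g y1 y2)) by ring.
    eapply Rle_trans; [apply Rabs_triang|]. rewrite !Rabs_mult.
    specialize (Hl1 x1 x2 y1 y2). specialize (Hl2 x1 x2 y1 y2).
    specialize (Hb1 y1 y2). specialize (Hb2 x1 x2).
    pose proof (Rabs_pos (f x1 x2 - f y1 y2)). pose proof (Rabs_pos (g x1 x2 - g y1 y2)).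
    pose proof (Rabs_pos (f y1 y2)). pose proof (Rabs_pos (g x1 x2)).
    set (D := Rabs (x1 - y1) + Rabs (x2 - y2)) in *.
    assert (Rabs (f x1 x2 - f y1 y2) * Rabs (g x1 x2) <= L1 * D * B2).
    { apply Rmult_le_compat; auto. }
    assert (Rabs (f y1 y2) * Rabs (g x1 x2 - g y1 y2) <= B1 * (L2 * D)).
    { apply Rmult_le_compat; auto. }
    nra.
  - rewrite Rabs_mult. apply Rmult_le_compat; auto using Rabs_pos.
Qed.

Lemma BL_lip1 (phi : R -> R) f : (forall u v, Rabs (phi u - phi v) <= Rabs (u - v)) ->
  BL f -> BL (fun x1 x2 => phi (f x1 x2)).
Proof.
  intros Hphi [L1 [B1 [HL1 [Hl1 Hb1]]]]. exists L1, (Rabs (phi 0) + B1). split; [lra|split]; intros.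
  - eapply Rle_trans; [apply Hphi| apply Hl1].
  - replace (phi (f x1 x2)) with (phi 0 + (phi (f x1 x2) - phi 0)) by ring.
    eapply Rle_trans; [apply Rabs_triang|]. specialize (Hphi (f x1 x2) 0).
    rewrite Rminus_0_r in Hphi. specialize (Hb1 x1 x2). lra.
Qed.

Lemma BL_exp f : BL f -> BL (fun x1 x2 => exp (f x1 x2)).
Proof.
  intros [L1 [B1 [HL1 [Hl1 Hb1]]]]. exists (exp B1 * L1), (exp B1). split.
  { pose proof (exp_pos B1); nra. } split; intros.
  - eapply Rle_trans; [apply exp_lip; apply Hb1|]. rewrite Rmult_assoc.
    apply Rmult_le_compat_l; [pose proof (exp_pos B1); lra| apply Hl1].
  - rewrite Rabs_right by (pose proof (exp_pos (f x1 x2)); lra). apply exp_le_exp.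
    specialize (Hb1 x1 x2). apply Rabs_le_inv in Hb1; lra.
Qed.

Lemma BL_cl1 M : 0 <= M -> BL (fun x1 x2 => cl M x1).
Proof.
  intros HM. exists 1, M. split; [lra|split]; intros.
  - pose proof (cl_lip M x1 y1 HM). pose proof (Rabs_pos (x2 - y2)). lra.
  - apply cl_bnd; auto.
Qed.

Lemma BL_cl2 M : 0 <= M -> BL (fun x1 x2 => cl M x2).
Proof.
  intros HM. exists 1, M. split; [lra|split]; intros.
  - pose proof (cl_lip M x2 y2 HM). pose proof (Rabs_pos (x1 - y1)). lra.
  - apply cl_bnd; auto.
Qed.

Definition Vdot l1 l2 us eps beta p q :=
  phi1 l1 p * f1 l1 l2 us eps beta p q + (1 + eps) * (phi2 l2 q * f2 l1 l2 us eps beta p q).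

Lemma quad_form beta k a b : 0 < k -> k < 4 * beta ->
  beta * (a + b)^2 - k * a * b >= Rmin (k/2) (2*beta - k/2) * (a^2 + b^2).
Proof.
  intros Hk Hkb. pose proof (Rmin_l (k/2) (2*beta - k/2)). pose proof (Rmin_r (k/2) (2*beta - k/2)).
  set (m := Rmin (k/2) (2*beta - k/2)) in *.
  assert (0 <= (a-b)^2) by apply pow2_ge_0. assert (0 <= (a+b)^2) by apply pow2_ge_0.
  assert (0 <= a^2 + b^2) by (pose proof (pow2_ge_0 a); pose proof (pow2_ge_0 b); lra).
  destruct (Rle_or_lt k (2*beta)).
  - assert (m * (a^2+b^2) <= k/2 * (a^2+b^2)) by (apply Rmult_le_compat_r; lra). nra.
  - assert (m * (a^2+b^2) <= (2*beta - k/2) * (a^2+b^2)) by (apply Rmult_le_compat_r; lra). nra.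
Qed.

Lemma Vdot_le l1 l2 us eps beta : 0 < l1 -> 0 < l2 -> 0 < eps -> eps / (4 * (1 + eps)) < beta ->
  exists mu, 0 < mu /\ forall p q, Vdot l1 l2 us eps beta p q <= - mu * (phi1 l1 p ^2 + phi2 l2 q ^2).
Proof.
  intros H1 H2 He Hb. set (k := eps / (1 + eps)).
  assert (Hk : 0 < k) by (unfold k; apply Rdiv_lt_0_compat; lra).
  assert (Hkb : k < 4 * beta).
  { unfold k. replace (eps / (1+eps)) with (4 * (eps / (4 * (1 + eps)))) by (field; lra). lra. }
  exists (Rmin (k/2) (2*beta - k/2)). split.
  { apply Rmin_case; lra. }
  intros p q. pose proof (quad_form beta k (phi1 l1 p) ((1+eps) * phi2 l2 q) Hk Hkb).
  set (m := Rmin (k/2) (2*beta - k/2)) in *.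
  assert (Hm : 0 < m) by (unfold m; apply Rmin_case; lra).
  assert (Heq : Vdot l1 l2 us eps beta p q = - (beta * (phi1 l1 p + (1+eps) * phi2 l2 q)^2 - k * phi1 l1 p * ((1+eps) * phi2 l2 q))).
  { unfold Vdot, f1, f2, ufb, k. field. lra. }
  rewrite Heq.
  assert ((phi2 l2 q)^2 <= ((1+eps) * phi2 l2 q)^2).
  { replace (((1+eps) * phi2 l2 q)^2) with ((1+eps)^2 * (phi2 l2 q)^2) by ring.
    pose proof (pow2_ge_0 (phi2 l2 q)). nra. }
  nra.
Qed.

Lemma Vdot_nonpos l1 l2 us eps beta p q : 0 < l1 -> 0 < l2 -> 0 < eps -> eps / (4 * (1 + eps)) < beta ->
  Vdot l1 l2 us eps beta p q <= 0.
Proof.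
  intros H1 H2 He Hb. destruct (Vdot_le l1 l2 us eps beta H1 H2 He Hb) as [mu [Hmu Hv]].
  specialize (Hv p q). pose proof (pow2_ge_0 (phi1 l1 p)). pose proof (pow2_ge_0 (phi2 l2 q)). nra.
Qed.

Lemma derive_V1 l1 l2 eps (e1 e2 : R -> R) t d1 d2 :
  is_derive e1 t d1 -> is_derive e2 t d2 ->
  is_derive (fun t => V1 l1 l2 eps (e1 t) (e2 t)) t (phi1 l1 (e1 t) * d1 + (1+eps) * (phi2 l2 (e2 t) * d2)).
Proof.
  intros H1 H2. unfold V1, Phi1, Phi2, phi1, phi2. auto_derive.
  - repeat split; solve [exists d1; exact H1 | exists d2; exact H2].
  - replace (Derive (fun x => e1 x) t) with d1 by (symmetry; apply is_derive_unique; exact H1).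
    replace (Derive (fun x => e2 x) t) with d2 by (symmetry; apply is_derive_unique; exact H2).
    ring.
Qed.

Lemma RC_comp (P e : R -> R) : CE P (e 0) -> RC e -> RC (fun t => P (e t)).
Proof.
  intros HP He eps Heps. destruct (HP eps Heps) as [d [Hd Hd']].
  destruct (He d Hd) as [d2 [Hd2 Hd2']]. exists d2; split; [exact Hd2|].
  intros s Hs. apply Hd'. apply Hd2'. auto.
Qed.

Lemma RC_plus f g : RC f -> RC g -> RC (fun t => f t + g t).
Proof.
  intros Hf Hg eps Heps. destruct (Hf (eps/2) ltac:(lra)) as [d1 [Hd1 H1]].
  destruct (Hg (eps/2) ltac:(lra)) as [d2 [Hd2 H2]].
  exists (Rmin d1 d2). split; [apply Rmin_case; lra|]. intros s Hs.
  assert (s < d1) by (eapply Rlt_le_trans; [apply Hs| apply Rmin_l]).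
  assert (s < d2) by (eapply Rlt_le_trans; [apply Hs| apply Rmin_r]).
  specialize (H1 s ltac:(lra)). specialize (H2 s ltac:(lra)).
  replace (f s + g s - (f 0 + g 0)) with ((f s - f 0) + (g s - g 0)) by ring.
  eapply Rle_lt_trans; [apply Rabs_triang|]. lra.
Qed.

Lemma RC_scal c f : RC f -> RC (fun t => c * f t).
Proof.
  intros Hf eps Heps. destruct (Hf (eps / (Rabs c + 1))) as [d [Hd H]].
  { apply Rdiv_lt_0_compat; [lra| pose proof (Rabs_pos c); lra]. }
  exists d; split; auto. intros s Hs. specialize (H s Hs).
  replace (c * f s - c * f 0) with (c * (f s - f 0)) by ring. rewrite Rabs_mult.
  pose proof (Rabs_pos c). pose proof (Rabs_pos (f s - f 0)).
  assert (Rabs c * Rabs (f s - f 0) <= (Rabs c + 1) * Rabs (f s - f 0)) by nra.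
  assert ((Rabs c + 1) * Rabs (f s - f 0) < (Rabs c + 1) * (eps / (Rabs c + 1))) by (apply Rmult_lt_compat_l; lra).
  replace ((Rabs c + 1) * (eps / (Rabs c + 1))) with eps in * by (field; lra). lra.
Qed.

Lemma RC_id : RC (fun t => t).
Proof. intros eps Heps. exists eps. split; auto. intros s Hs. rewrite Rminus_0_r, Rabs_right; lra. Qed.

Lemma dPhi1 l1 x : is_derive (Phi1 l1) x (phi1 l1 x).
Proof. unfold Phi1, phi1. auto_derive; auto. ring. Qed.
Lemma dPhi2 l2 x : is_derive (Phi2 l2) x (phi2 l2 x).
Proof. unfold Phi2, phi2. auto_derive; auto. ring. Qed.

Lemma RC_V1 l1 l2 eps e1 e2 : RC e1 -> RC e2 -> RC (fun t => V1 l1 l2 eps (e1 t) (e2 t)).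
Proof.
  intros H1 H2. unfold V1. apply RC_plus.
  - apply (RC_comp (Phi1 l1) e1); auto. eapply CE_of_derive. apply dPhi1.
  - apply RC_scal. apply (RC_comp (Phi2 l2) e2); auto. eapply CE_of_derive. apply dPhi2.
Qed.

Lemma sol_RC l1 l2 us eps beta e1 e2 : is_solution l1 l2 us eps beta e1 e2 -> RC e1 /\ RC e2.
Proof. intros [_ [H1 H2]]. split; apply RC_of_filterlim; auto. Qed.

Lemma sol_derive_V l1 l2 us eps beta e1 e2 : is_solution l1 l2 us eps beta e1 e2 ->
  forall t, 0 < t -> is_derive (fun t => V1 l1 l2 eps (e1 t) (e2 t)) t (Vdot l1 l2 us eps beta (e1 t) (e2 t)).
Proof.
  intros [Hd _] t Ht. destruct (Hd t Ht) as [H1 H2]. unfold Vdot. apply derive_V1; auto.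
Qed.

Lemma lyap_sol l1 l2 us eps beta e1 e2 : 0 < l1 -> 0 < l2 -> 0 < eps -> eps / (4 * (1 + eps)) < beta ->
  is_solution l1 l2 us eps beta e1 e2 ->
  forall t, 0 <= t -> V1 l1 l2 eps (e1 t) (e2 t) <= V1 l1 l2 eps (e1 0) (e2 0).
Proof.
  intros H1 H2 He Hb Hs.
  apply (mono_open (fun t => V1 l1 l2 eps (e1 t) (e2 t)) (fun t => Vdot l1 l2 us eps beta (e1 t) (e2 t))).
  - apply sol_derive_V; auto.
  - intros; apply Vdot_nonpos; auto.
  - destruct (sol_RC _ _ _ _ _ _ _ Hs). apply RC_V1; auto.
Qed.

Lemma lim_real u (l : R) : is_lim_seq u l -> real (Lim_seq u) = l.
Proof. intros H. rewrite (is_lim_seq_unique u l H). reflexivity. Qed.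

Lemma cauchy_dom (u P : nat -> R) (l : R) :
  (forall n k, Rabs (u (n + k)%nat - u n) <= P (n + k)%nat - P n) -> is_lim_seq P l ->
  is_lim_seq u (real (Lim_seq u)) /\ forall n, Rabs (real (Lim_seq u) - u n) <= l - P n.
Proof.
  intros Hd Hl.
  assert (Hc : ex_finite_lim_seq u).
  { apply ex_lim_seq_cauchy_corr. intros [eps Heps]. simpl.
    apply is_lim_seq_Reals in Hl. destruct (Hl (eps/2) ltac:(lra)) as [N HN].
    exists N. intros n m Hn Hm.
    assert (Hgen : forall p q, (N <= p)%nat -> (p <= q)%nat -> Rabs (u q - u p) < eps).
    { intros p q Hp Hq. replace q with (p + (q - p))%nat by lia.
      eapply Rle_lt_trans; [apply Hd|]. replace (p + (q - p))%nat with q by lia.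
      assert (H1 := HN q ltac:(lia)). assert (H2 := HN p ltac:(lia)). unfold Rdist in *.
      apply Rabs_def2 in H1. apply Rabs_def2 in H2. lra. }
    destruct (Nat.le_ge_cases n m).
    - rewrite Rabs_minus_sym. apply Hgen; lia.
    - apply Hgen; lia. }
  destruct Hc as [lu Hlu]. rewrite (lim_real u lu Hlu). split; auto.
  intros n.
  assert (Hle := is_lim_seq_le_loc (fun m => Rabs (u m - u n)) (fun m => P m - P n) (Rabs (lu - u n)) (l - P n)).
  simpl in Hle. apply Hle.
  - exists n. intros m Hm. replace m with (n + (m - n))%nat by lia. apply Hd.
  - apply (is_lim_seq_abs _ (lu - u n)). apply is_lim_seq_minus'; auto. apply is_lim_seq_const.
  - apply is_lim_seq_minus'; auto. apply is_lim_seq_const.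
Qed.

Lemma deriv_from_approx (Y : nat -> R -> R) (y : R -> R) (g : nat -> R -> R) gs t C (en : nat -> R) :
  0 < t -> 0 <= C ->
  (forall n s, is_derive (Y n) s (g n s)) ->
  (forall s, t/2 <= s <= 3*t/2 -> is_lim_seq (fun n => Y n s) (y s)) ->
  is_lim_seq en 0 ->
  (forall n s, t/2 <= s <= 3*t/2 -> Rabs (g n s - gs) <= en n + C * Rabs (s - t)) ->
  is_derive y t gs.
Proof.
  intros Ht HC Hd Hl He Hb.
  assert (Key : forall h, Rabs h < t/2 -> Rabs (y (t + h) - y t - h * gs) <= C * h^2).
  { intros h Hh. assert (Hh' := Rabs_le_inv h (t/2) ltac:(lra)).
    assert (Hn : forall n, Rabs (Y n (t + h) - Y n t - h * gs) <= (en n + C * Rabs h) * Rabs h).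
    { intros n.
      assert (E := mvt_bound (fun s => Y n s - s * gs) (fun s => g n s - gs) t (t+h) (en n + C * Rabs h)).
      replace (Y n (t + h) - Y n t - h * gs) with (Y n (t + h) - (t + h) * gs - (Y n t - t * gs)) by ring.
      replace (Rabs h) with (Rabs (t + h - t)) at 2 by (f_equal; ring).
      apply E.
      - intros s _. apply (is_derive_minus (Y n) (fun s => s * gs)). apply Hd.
        auto_derive; auto; ring.
      - intros s Hs.
        assert (t/2 <= s <= 3*t/2) by (revert Hs; apply Rmin_case; apply Rmax_case; lra).
        eapply Rle_trans; [apply Hb; auto|].
        assert (Rabs (s - t) <= Rabs h).
        { revert Hs. apply Rmin_case; apply Rmax_case; intros; unfold Rabs; repeat destruct Rcase_abs; lra. }
        apply Rplus_le_compat_l. apply Rmult_le_compat_l; auto. }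
    assert (HL := is_lim_seq_le (fun n => Rabs (Y n (t + h) - Y n t - h * gs)) (fun n => (en n + C * Rabs h) * Rabs h)
       (Rabs (y (t+h) - y t - h * gs)) ((0 + C * Rabs h) * Rabs h) Hn).
    simpl in HL.
    replace (C * h^2) with ((0 + C * Rabs h) * Rabs h).
    2:{ replace (h^2) with (Rabs h * Rabs h). ring. rewrite <- Rabs_mult. simpl. rewrite Rmult_1_r. apply Rabs_right.
        pose proof (Rle_0_sqr h). unfold Rsqr in *. lra. }
    apply HL.
    - apply (is_lim_seq_abs _ (y (t+h) - y t - h * gs)). apply is_lim_seq_minus'; [apply is_lim_seq_minus'|apply is_lim_seq_const].
      + apply Hl; lra.
      + apply Hl; lra.
    - apply (is_lim_seq_mult' _ _ (0 + C * Rabs h) (Rabs h)); [| apply is_lim_seq_const].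
      apply is_lim_seq_plus'; auto. apply is_lim_seq_const. }
  apply is_derive_Reals. intros eps Heps.
  assert (Hd0 : 0 < Rmin (t/2) (eps / (C + 1))) by (apply Rmin_case; [lra| apply Rdiv_lt_0_compat; lra]).
  exists (mkposreal _ Hd0). simpl. intros h Hh0 Hh.
  assert (Hh1 : Rabs h < t/2) by (eapply Rlt_le_trans; [apply Hh| apply Rmin_l]).
  assert (Hh2 : Rabs h < eps / (C + 1)) by (eapply Rlt_le_trans; [apply Hh| apply Rmin_r]).
  specialize (Key h Hh1).
  replace ((y (t + h) - y t) / h - gs) with ((y (t + h) - y t - h * gs) / h) by (field; auto).
  unfold Rdiv. rewrite Rabs_mult, Rabs_inv.
  assert (Hap : 0 < Rabs h) by (apply Rabs_pos_lt; auto).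
  apply (Rmult_lt_reg_r (Rabs h)); auto. rewrite Rmult_assoc, Rinv_l by lra. rewrite Rmult_1_r.
  assert (h^2 = Rabs h * Rabs h) by (rewrite <- Rabs_mult; simpl; rewrite Rmult_1_r; symmetry; apply Rabs_right; pose proof (Rle_0_sqr h); unfold Rsqr in *; lra).
  assert (C * Rabs h < eps).
  { apply (Rmult_lt_compat_l (C+1)) in Hh2; [|lra]. replace ((C + 1) * (eps / (C + 1))) with eps in Hh2 by (field; lra). nra. }
  nra.
Qed.

Lemma sign4 (F1 F2 H dF1 dF2 dH : R -> R) t : 0 <= t ->
  (forall s, 0 <= s <= t -> is_derive F1 s (dF1 s)) ->
  (forall s, 0 <= s <= t -> is_derive F2 s (dF2 s)) ->
  (forall s, 0 <= s <= t -> is_derive H s (dH s)) ->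
  (forall s, 0 <= s <= t -> Rabs (dF1 s) + Rabs (dF2 s) <= dH s) ->
  F1 0 = 0 -> F2 0 = 0 -> H 0 = 0 -> Rabs (F1 t) + Rabs (F2 t) <= H t.
Proof.
  intros Ht H1 H2 H3 Hb E1 E2 E3.
  assert (Key : forall s1 s2, Rabs s1 <= 1 -> Rabs s2 <= 1 -> s1 * F1 t + s2 * F2 t <= H t).
  { intros s1 s2 Hs1 Hs2.
    assert (M := mono_closed (fun x => H x - s1 * F1 x - s2 * F2 x) (fun x => dH x - s1 * dF1 x - s2 * dF2 x) 0 t Ht).
    simpl in M. rewrite E1, E2, E3 in M.
    assert (0 <= H t - s1 * F1 t - s2 * F2 t); [|lra].
    replace 0 with (0 - s1 * 0 - s2 * 0) by ring. apply M.
    - intros s Hs. specialize (H1 s Hs). specialize (H2 s Hs). specialize (H3 s Hs).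
      auto_derive.
      + repeat split; solve [exists (dF1 s); exact H1 | exists (dF2 s); exact H2 | exists (dH s); exact H3].
      + replace (Derive (fun x => F1 x) s) with (dF1 s) by (symmetry; apply is_derive_unique; exact H1).
        replace (Derive (fun x => F2 x) s) with (dF2 s) by (symmetry; apply is_derive_unique; exact H2).
        replace (Derive (fun x => H x) s) with (dH s) by (symmetry; apply is_derive_unique; exact H3).
        ring.
    - intros s Hs. specialize (Hb s Hs).
      assert (s1 * dF1 s <= Rabs (dF1 s)).
      { eapply Rle_trans; [apply Rle_abs|]. rewrite Rabs_mult. pose proof (Rabs_pos (dF1 s)). nra. }
      assert (s2 * dF2 s <= Rabs (dF2 s)).
      { eapply Rle_trans; [apply Rle_abs|]. rewrite Rabs_mult. pose proof (Rabs_pos (dF2 s)). nra. }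
      lra. }
  assert (Hsg : forall x, exists s, Rabs s <= 1 /\ s * x = Rabs x).
  { intros x. destruct (Rle_or_lt 0 x).
    - exists 1. rewrite (Rabs_right x) by lra. split; [unfold Rabs; destruct Rcase_abs; lra| ring].
    - exists (-1). rewrite (Rabs_left x) by lra. split; [unfold Rabs; destruct Rcase_abs; lra| ring]. }
  destruct (Hsg (F1 t)) as [s1 [Hs1 E1']]. destruct (Hsg (F2 t)) as [s2 [Hs2 E2']].
  rewrite <- E1', <- E2'. apply Key; auto.
Qed.

Lemma prim_deriv (g : R -> R) : (forall t, continuous g t) ->
  forall a t, is_derive (fun t => a + RInt g 0 t) t (g t).
Proof.
  intros Hc a t.
  assert (H : is_derive (fun t => RInt g 0 t) t (g t)).
  { apply (is_derive_RInt g (fun t => RInt g 0 t) 0 t).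
    - exists (mkposreal 1 Rlt_0_1). intros y _. apply (RInt_correct (V := R_CompleteNormedModule)). apply (ex_RInt_continuous (V := R_CompleteNormedModule)). intros; apply Hc.
    - apply Hc. }
  assert (H2 := is_derive_plus (fun _ => a) (fun t => RInt g 0 t) t 0 (g t) (is_derive_const a t) H).
  replace (g t) with (plus 0 (g t)) by (unfold plus; simpl; ring). exact H2.
Qed.

Fixpoint pic (G1 G2 : R -> R -> R) (a b : R) (n : nat) : (R -> R) * (R -> R) :=
  match n with
  | O => (fun _ => a, fun _ => b)
  | S n => (fun t => a + RInt (fun s => G1 (fst (pic G1 G2 a b n) s) (snd (pic G1 G2 a b n) s)) 0 t,
            fun t => b + RInt (fun s => G2 (fst (pic G1 G2 a b n) s) (snd (pic G1 G2 a b n) s)) 0 t)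
  end.

Definition LipG (G : R -> R -> R) L0 := forall x1 x2 y1 y2, Rabs (G x1 x2 - G y1 y2) <= L0 * (Rabs (x1-y1) + Rabs (x2-y2)).

Lemma CE_G G L0 (y1 y2 : R -> R) t : 0 <= L0 -> LipG G L0 -> CE y1 t -> CE y2 t -> CE (fun s => G (y1 s) (y2 s)) t.
Proof.
  intros HL HG H1 H2 eps Heps.
  destruct (H1 (eps / (2 * L0 + 2))) as [d1 [Hd1 K1]]. { apply Rdiv_lt_0_compat; lra. }
  destruct (H2 (eps / (2 * L0 + 2))) as [d2 [Hd2 K2]]. { apply Rdiv_lt_0_compat; lra. }
  exists (Rmin d1 d2). split; [apply Rmin_case; lra|]. intros s Hs.
  assert (Rabs (s - t) < d1) by (eapply Rlt_le_trans; [apply Hs| apply Rmin_l]).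
  assert (Rabs (s - t) < d2) by (eapply Rlt_le_trans; [apply Hs| apply Rmin_r]).
  specialize (K1 s ltac:(lra)). specialize (K2 s ltac:(lra)).
  eapply Rle_lt_trans; [apply HG|].
  set (e := eps / (2 * L0 + 2)) in *.
  assert (He : (2 * L0 + 2) * e = eps) by (unfold e; field; lra).
  pose proof (Rabs_pos (y1 s - y1 t)). pose proof (Rabs_pos (y2 s - y2 t)).
  assert (L0 * (Rabs (y1 s - y1 t) + Rabs (y2 s - y2 t)) <= L0 * (2 * e)) by (apply Rmult_le_compat_l; lra).
  assert (0 < e) by (unfold e; apply Rdiv_lt_0_compat; lra). nra.
Qed.

Lemma is_derive_minusR (f g : R -> R) x df dg : is_derive f x df -> is_derive g x dg -> is_derive (fun t => f t - g t) x (df - dg).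
Proof. intros H1 H2. exact (is_derive_minus f g x df dg H1 H2). Qed.

Lemma is_derive_constR (c x : R) : is_derive (fun _ => c) x 0.
Proof. exact (is_derive_const c x). Qed.

Lemma CE_const c t : CE (fun _ => c) t.
Proof. intros eps He. exists 1. split; [lra|]. intros. rewrite Rminus_eq_0, Rabs_R0; auto. Qed.

Lemma pic_CE G1 G2 a b L0 : 0 <= L0 -> LipG G1 L0 -> LipG G2 L0 ->
  forall n t, CE (fst (pic G1 G2 a b n)) t /\ CE (snd (pic G1 G2 a b n)) t.
Proof.
  intros HL H1 H2 n. induction n as [|n IH]; intros t.
  - simpl. split; apply CE_const.
  - simpl. split.
    + eapply CE_of_derive. apply prim_deriv. intros s. apply cont_of_CE. apply (CE_G G1 L0); auto; apply IH.
    + eapply CE_of_derive. apply prim_deriv. intros s. apply cont_of_CE. apply (CE_G G2 L0); auto; apply IH.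
Qed.

Lemma pic_der G1 G2 a b L0 : 0 <= L0 -> LipG G1 L0 -> LipG G2 L0 ->
  forall n t, is_derive (fst (pic G1 G2 a b (S n))) t (G1 (fst (pic G1 G2 a b n) t) (snd (pic G1 G2 a b n) t)) /\
              is_derive (snd (pic G1 G2 a b (S n))) t (G2 (fst (pic G1 G2 a b n) t) (snd (pic G1 G2 a b n) t)).
Proof.
  intros HL H1 H2 n t. simpl. split.
  - apply (prim_deriv (fun s => G1 (fst (pic G1 G2 a b n) s) (snd (pic G1 G2 a b n) s))).
    intros s. apply cont_of_CE. apply (CE_G G1 L0); auto; apply (pic_CE G1 G2 a b L0); auto.
  - apply (prim_deriv (fun s => G2 (fst (pic G1 G2 a b n) s) (snd (pic G1 G2 a b n) s))).
    intros s. apply cont_of_CE. apply (CE_G G2 L0); auto; apply (pic_CE G1 G2 a b L0); auto.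
Qed.

Lemma pic0 G1 G2 a b n : fst (pic G1 G2 a b n) 0 = a /\ snd (pic G1 G2 a b n) 0 = b.
Proof.
  destruct n; simpl; auto. rewrite !RInt_point. unfold zero; simpl. split; ring.
Qed.

Definition bk K Lg n t := K * (Lg * t)^(S n) / INR (fact (S n)).

Lemma bk_pos K Lg n t : 0 <= K -> 0 <= Lg -> 0 <= t -> 0 <= bk K Lg n t.
Proof.
  intros. unfold bk. apply Rmult_le_pos; [apply Rmult_le_pos; auto; apply pow_le; nra|].
  left. apply Rinv_0_lt_compat. apply lt_0_INR. apply lt_O_fact.
Qed.

Lemma bk_mono K Lg n t T : 0 <= K -> 0 <= Lg -> 0 <= t <= T -> bk K Lg n t <= bk K Lg n T.
Proof.
  intros. unfold bk. apply Rmult_le_compat_r; [left; apply Rinv_0_lt_compat, lt_0_INR, lt_O_fact|].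
  apply Rmult_le_compat_l; auto. apply pow_incr. split; nra.
Qed.

Lemma bk_der K Lg n s : is_derive (bk K Lg (S n)) s (Lg * bk K Lg n s).
Proof.
  unfold bk.
  assert (Hf : 0 < INR (fact (S n))) by apply lt_0_INR, lt_O_fact.
  assert (HS : 0 < INR (S (S n))) by (apply lt_0_INR; lia).
  assert (E : INR (fact (S (S n))) = INR (S (S n)) * INR (fact (S n))) by (rewrite fact_simpl, mult_INR; reflexivity).
  replace (Lg * (K * (Lg*s)^(S n) / INR (fact (S n)))) with (K / INR (fact (S (S n))) * (INR (S (S n)) * Lg * (Lg * s) ^ pred (S (S n)))).
  2: { rewrite E. simpl pred. field. lra. }
  refine (is_derive_ext (fun t => K / INR (fact (S (S n))) * (Lg * t)^(S (S n))) _ s _ _ _).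
  { intros t. match goal with |- ?A = ?B => change (@eq R A B) end. unfold Rdiv. ring. }
  apply is_derive_scal. apply (is_derive_pow (fun t => Lg * t)). auto_derive; repeat split; try ring.
Qed.

Lemma bk0_der K Lg s : is_derive (bk K Lg 0) s (K * Lg).
Proof. unfold bk. simpl fact. auto_derive; auto. simpl. match goal with |- ?A = ?B => change (@eq R A B) end. field. Qed.

Lemma pic_bound G1 G2 a b L0 B : 0 <= L0 -> 0 <= B -> LipG G1 L0 -> LipG G2 L0 ->
  (forall x1 x2, Rabs (G1 x1 x2) <= B) -> (forall x1 x2, Rabs (G2 x1 x2) <= B) ->
  forall n t, 0 <= t ->
  Rabs (fst (pic G1 G2 a b (S n)) t - fst (pic G1 G2 a b n) t) +
  Rabs (snd (pic G1 G2 a b (S n)) t - snd (pic G1 G2 a b n) t) <= bk (2*B/(2*L0+1)) (2*L0+1) n t.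
Proof.
  intros HL HB H1 H2 B1 B2 n. set (K := 2*B/(2*L0+1)). set (Lg := 2*L0+1).
  assert (HK : 0 <= K) by (unfold K; apply Rmult_le_pos; [lra| left; apply Rinv_0_lt_compat; lra]).
  assert (HLg : 0 < Lg) by (unfold Lg; lra).
  assert (Dr := pic_der G1 G2 a b L0 HL H1 H2).
  induction n as [|n IH]; intros t Ht.
  - apply (sign4 (fun s => fst (pic G1 G2 a b 1) s - fst (pic G1 G2 a b 0) s)
                 (fun s => snd (pic G1 G2 a b 1) s - snd (pic G1 G2 a b 0) s) (bk K Lg 0)
                 (fun s => G1 (fst (pic G1 G2 a b 0) s) (snd (pic G1 G2 a b 0) s) - 0)
                 (fun s => G2 (fst (pic G1 G2 a b 0) s) (snd (pic G1 G2 a b 0) s) - 0) (fun s => K * Lg)); auto.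
    + intros s _. apply is_derive_minusR; [apply Dr| simpl; apply is_derive_constR].
    + intros s _. apply is_derive_minusR; [apply Dr| simpl; apply is_derive_constR].
    + intros s _. apply bk0_der.
    + intros s _. rewrite !Rminus_0_r. unfold K. specialize (B1 a b). specialize (B2 a b). simpl.
      replace (2*B/(2*L0+1)*Lg) with (2*B) by (unfold Lg; field; lra). lra.
    + destruct (pic0 G1 G2 a b 1) as [E1 E2]; destruct (pic0 G1 G2 a b 0) as [E3 E4]; rewrite E1, E3; ring.
    + destruct (pic0 G1 G2 a b 1) as [E1 E2]; destruct (pic0 G1 G2 a b 0) as [E3 E4]; rewrite E2, E4; ring.
    + unfold bk. rewrite Rmult_0_r, pow_i by lia. unfold Rdiv. ring.
  - apply (sign4 (fun s => fst (pic G1 G2 a b (S (S n))) s - fst (pic G1 G2 a b (S n)) s)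
                 (fun s => snd (pic G1 G2 a b (S (S n))) s - snd (pic G1 G2 a b (S n)) s) (bk K Lg (S n)) (fun s => G1 (fst (pic G1 G2 a b (S n)) s) (snd (pic G1 G2 a b (S n)) s) - G1 (fst (pic G1 G2 a b n) s) (snd (pic G1 G2 a b n) s))
                       (fun s => G2 (fst (pic G1 G2 a b (S n)) s) (snd (pic G1 G2 a b (S n)) s) - G2 (fst (pic G1 G2 a b n) s) (snd (pic G1 G2 a b n) s))
                       (fun s => Lg * bk K Lg n s)); auto.
    + intros s _. apply is_derive_minusR; apply Dr.
    + intros s _. apply is_derive_minusR; apply Dr.
    + intros s _. apply bk_der.
    + intros s Hs. specialize (IH s ltac:(lra)).
      eapply Rle_trans; [apply Rplus_le_compat; [apply H1| apply H2]|].
      assert (0 <= Rabs (fst (pic G1 G2 a b (S n)) s - fst (pic G1 G2 a b n) s) + Rabs (snd (pic G1 G2 a b (S n)) s - snd (pic G1 G2 a b n) s))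
        by (pose proof (Rabs_pos (fst (pic G1 G2 a b (S n)) s - fst (pic G1 G2 a b n) s)); pose proof (Rabs_pos (snd (pic G1 G2 a b (S n)) s - snd (pic G1 G2 a b n) s)); lra).
      pose proof (bk_pos K Lg n s HK ltac:(lra) ltac:(lra)). unfold Lg in *. nra.
    + destruct (pic0 G1 G2 a b (S (S n))) as [E1 E2]. destruct (pic0 G1 G2 a b (S n)) as [E3 E4]. rewrite E1, E3; ring.
    + destruct (pic0 G1 G2 a b (S (S n))) as [E1 E2]. destruct (pic0 G1 G2 a b (S n)) as [E3 E4]. rewrite E2, E4; ring.
    + unfold bk. rewrite Rmult_0_r, pow_i by lia. unfold Rdiv. ring.
Qed.

Definition Hyp (G1 G2 : R -> R -> R) L0 B := 0 <= L0 /\ 0 <= B /\ LipG G1 L0 /\ LipG G2 L0 /\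
  (forall x1 x2, Rabs (G1 x1 x2) <= B) /\ (forall x1 x2, Rabs (G2 x1 x2) <= B).

Definition Ex y n := sum_n (fun j => scal (pow_n y j) (/ INR (fact j))) n.
Definition PP K Lg T n := K * (Ex (Lg * T) n - 1).

Lemma Ex_S y n : Ex y (S n) = Ex y n + y^(S n) * / INR (fact (S n)).
Proof. unfold Ex. rewrite sum_Sn, pow_n_pow. reflexivity. Qed.

Lemma PP_step K Lg T n : PP K Lg T (S n) - PP K Lg T n = bk K Lg n T.
Proof. unfold PP, bk. rewrite Ex_S. unfold Rdiv. ring. Qed.

Lemma PP_lim K Lg T : is_lim_seq (PP K Lg T) (K * (exp (Lg * T) - 1)).
Proof.
  unfold PP. apply (is_lim_seq_mult' (fun _ => K) (fun n => Ex (Lg*T) n - 1)).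
  - apply is_lim_seq_const.
  - apply is_lim_seq_minus'; [| apply is_lim_seq_const]. exact (is_exp_Reals (Lg * T)).
Qed.

Lemma tele G1 G2 a b L0 B : Hyp G1 G2 L0 B -> forall T t, 0 <= t <= T -> forall n k,
  Rabs (fst (pic G1 G2 a b (n + k)) t - fst (pic G1 G2 a b n) t) +
  Rabs (snd (pic G1 G2 a b (n + k)) t - snd (pic G1 G2 a b n) t) <=
  PP (2*B/(2*L0+1)) (2*L0+1) T (n + k) - PP (2*B/(2*L0+1)) (2*L0+1) T n.
Proof.
  intros [HL [HB [H1 [H2 [B1 B2]]]]] T t Ht n k.
  set (K := 2*B/(2*L0+1)). set (Lg := 2*L0+1).
  assert (HK : 0 <= K) by (unfold K; apply Rmult_le_pos; [lra| left; apply Rinv_0_lt_compat; lra]).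
  induction k as [|k IH].
  - rewrite Nat.add_0_r, !Rminus_eq_0, Rabs_R0. lra.
  - rewrite Nat.add_succ_r.
    assert (Hb := pic_bound G1 G2 a b L0 B HL HB H1 H2 B1 B2 (n + k) t ltac:(lra)).
    fold K Lg in Hb. pose proof (bk_mono K Lg (n+k) t T HK ltac:(unfold Lg; lra) Ht).
    pose proof (PP_step K Lg T (n + k)).
    set (u1 := fst (pic G1 G2 a b (S (n + k))) t) in *. set (v1 := fst (pic G1 G2 a b (n + k)) t) in *.
    set (w1 := fst (pic G1 G2 a b n) t) in *.
    set (u2 := snd (pic G1 G2 a b (S (n + k))) t) in *. set (v2 := snd (pic G1 G2 a b (n + k)) t) in *.
    set (w2 := snd (pic G1 G2 a b n) t) in *.
    assert (Rabs (u1 - w1) <= Rabs (u1 - v1) + Rabs (v1 - w1)) by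
      (replace (u1 - w1) with ((u1 - v1) + (v1 - w1)) by ring; apply Rabs_triang).
    assert (Rabs (u2 - w2) <= Rabs (u2 - v2) + Rabs (v2 - w2)) by
      (replace (u2 - w2) with ((u2 - v2) + (v2 - w2)) by ring; apply Rabs_triang).
    lra.
Qed.

Lemma time_lip G1 G2 a b L0 B : Hyp G1 G2 L0 B -> forall n u v,
  Rabs (fst (pic G1 G2 a b n) u - fst (pic G1 G2 a b n) v) <= B * Rabs (u - v) /\
  Rabs (snd (pic G1 G2 a b n) u - snd (pic G1 G2 a b n) v) <= B * Rabs (u - v).
Proof.
  intros [HL [HB [H1 [H2 [B1 B2]]]]] n u v. destruct n as [|n].
  - simpl. rewrite !Rminus_eq_0, Rabs_R0. pose proof (Rabs_pos (u - v)). split; nra.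
  - assert (Dr := pic_der G1 G2 a b L0 HL H1 H2 n). split.
    + apply (mvt_bound (fst (pic G1 G2 a b (S n))) (fun s => G1 (fst (pic G1 G2 a b n) s) (snd (pic G1 G2 a b n) s)) v u B).
      * intros s _. apply Dr.
      * intros s _. apply B1.
    + apply (mvt_bound (snd (pic G1 G2 a b (S n))) (fun s => G2 (fst (pic G1 G2 a b n) s) (snd (pic G1 G2 a b n) s)) v u B).
      * intros s _. apply Dr.
      * intros s _. apply B2.
Qed.

Lemma conv G1 G2 a b L0 B : Hyp G1 G2 L0 B -> forall T t, 0 <= t <= T ->
  (is_lim_seq (fun n => fst (pic G1 G2 a b n) t) (real (Lim_seq (fun n => fst (pic G1 G2 a b n) t))) /\
   forall n, Rabs (real (Lim_seq (fun n => fst (pic G1 G2 a b n) t)) - fst (pic G1 G2 a b n) t) <=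
     2*B/(2*L0+1) * (exp ((2*L0+1) * T) - 1) - PP (2*B/(2*L0+1)) (2*L0+1) T n) /\
  (is_lim_seq (fun n => snd (pic G1 G2 a b n) t) (real (Lim_seq (fun n => snd (pic G1 G2 a b n) t))) /\
   forall n, Rabs (real (Lim_seq (fun n => snd (pic G1 G2 a b n) t)) - snd (pic G1 G2 a b n) t) <=
     2*B/(2*L0+1) * (exp ((2*L0+1) * T) - 1) - PP (2*B/(2*L0+1)) (2*L0+1) T n).
Proof.
  intros Hh T t Ht. assert (Tl := tele G1 G2 a b L0 B Hh T t Ht). split.
  - apply cauchy_dom; [| apply PP_lim]. intros n k. specialize (Tl n k).
    pose proof (Rabs_pos (snd (pic G1 G2 a b (n + k)) t - snd (pic G1 G2 a b n) t)). lra.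
  - apply cauchy_dom; [| apply PP_lim]. intros n k. specialize (Tl n k).
    pose proof (Rabs_pos (fst (pic G1 G2 a b (n + k)) t - fst (pic G1 G2 a b n) t)). lra.
Qed.

Theorem ode_exists G1 G2 L0 B a b : Hyp G1 G2 L0 B ->
  exists x1 x2 : R -> R, x1 0 = a /\ x2 0 = b /\ RC x1 /\ RC x2 /\
    forall t, 0 < t -> is_derive x1 t (G1 (x1 t) (x2 t)) /\ is_derive x2 t (G2 (x1 t) (x2 t)).
Proof.
  intros Hh. pose proof Hh as [HL [HB [H1 [H2 [B1 B2]]]]].
  set (X1 := fun n => fst (pic G1 G2 a b n)). set (X2 := fun n => snd (pic G1 G2 a b n)).
  set (x1 := fun t => real (Lim_seq (fun n => X1 n t))).
  set (x2 := fun t => real (Lim_seq (fun n => X2 n t))).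
  set (K := 2*B/(2*L0+1)). set (Lg := 2*L0+1).
  assert (Cv : forall T t, 0 <= t <= T ->
    (is_lim_seq (fun n => X1 n t) (x1 t) /\ forall n, Rabs (x1 t - X1 n t) <= K * (exp (Lg * T) - 1) - PP K Lg T n) /\
    (is_lim_seq (fun n => X2 n t) (x2 t) /\ forall n, Rabs (x2 t - X2 n t) <= K * (exp (Lg * T) - 1) - PP K Lg T n)).
  { intros T t Ht. exact (conv G1 G2 a b L0 B Hh T t Ht). }
  assert (TL := time_lip G1 G2 a b L0 B Hh).
  assert (Lip : forall u v, 0 <= u -> 0 <= v -> Rabs (x1 u - x1 v) <= B * Rabs (u - v) /\ Rabs (x2 u - x2 v) <= B * Rabs (u - v)).
  { intros u v Hu Hv. destruct (Cv u u ltac:(lra)) as [[Lu1 _] [Lu2 _]]. destruct (Cv v v ltac:(lra)) as [[Lv1 _] [Lv2 _]].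
    split.
    - assert (Hle := is_lim_seq_le (fun n => Rabs (X1 n u - X1 n v)) (fun _ => B * Rabs (u - v)) (Rabs (x1 u - x1 v)) (B * Rabs (u - v))).
      apply Hle; [intros n; apply TL| |apply is_lim_seq_const].
      apply (is_lim_seq_abs _ (x1 u - x1 v)). apply is_lim_seq_minus'; auto.
    - assert (Hle := is_lim_seq_le (fun n => Rabs (X2 n u - X2 n v)) (fun _ => B * Rabs (u - v)) (Rabs (x2 u - x2 v)) (B * Rabs (u - v))).
      apply Hle; [intros n; apply TL| |apply is_lim_seq_const].
      apply (is_lim_seq_abs _ (x2 u - x2 v)). apply is_lim_seq_minus'; auto. }
  assert (Z1 : x1 0 = a).
  { unfold x1. apply lim_real. apply (is_lim_seq_ext (fun _ => a)); [| apply is_lim_seq_const].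
    intros n. symmetry. apply (pic0 G1 G2 a b n). }
  assert (Z2 : x2 0 = b).
  { unfold x2. apply lim_real. apply (is_lim_seq_ext (fun _ => b)); [| apply is_lim_seq_const].
    intros n. symmetry. apply (pic0 G1 G2 a b n). }
  assert (RCg : forall (x : R -> R), (forall u, 0 <= u -> Rabs (x u - x 0) <= B * Rabs (u - 0)) -> RC x).
  { intros x Hx eps Heps. exists (eps / (B + 1)). split; [apply Rdiv_lt_0_compat; lra|].
    intros s Hs. eapply Rle_lt_trans; [apply Hx; lra|]. rewrite Rminus_0_r, Rabs_right by lra.
    assert (s * (B + 1) < eps).
    { destruct Hs as [_ Hs]. apply (Rmult_lt_compat_r (B+1)) in Hs; [|lra].
      replace (eps / (B + 1) * (B + 1)) with eps in Hs by (field; lra). lra. }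
    nra. }
  exists x1, x2. split; [auto| split; [auto| split; [|split]]].
  - apply RCg. intros u Hu. apply Lip; lra.
  - apply RCg. intros u Hu. apply Lip; lra.
  - intros t Ht.
    set (PL := K * (exp (Lg * (2*t)) - 1)).
    assert (He : is_lim_seq (fun n => L0 * (2 * (PL - PP K Lg (2*t) n))) 0).
    { replace (Finite 0) with (Finite (L0 * (2 * (PL - PL)))) by (f_equal; ring).
      apply (is_lim_seq_mult' (fun _ => L0) (fun n => 2 * (PL - PP K Lg (2*t) n)) L0 (2 * (PL - PL)) (is_lim_seq_const L0)).
      apply (is_lim_seq_mult' (fun _ => 2)); [apply is_lim_seq_const|].
      apply is_lim_seq_minus'; [apply is_lim_seq_const| apply PP_lim]. }
    assert (Dr := pic_der G1 G2 a b L0 HL H1 H2).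
    assert (Bnd : forall n s, t/2 <= s <= 3*t/2 ->
      Rabs (X1 n s - x1 t) + Rabs (X2 n s - x2 t) <= 2 * (PL - PP K Lg (2*t) n) + 2 * B * Rabs (s - t)).
    { intros n s Hs. destruct (Cv (2*t) s ltac:(lra)) as [[_ T1] [_ T2]].
      destruct (Lip s t ltac:(lra) ltac:(lra)) as [L1 L2].
      specialize (T1 n). specialize (T2 n).
      assert (Rabs (X1 n s - x1 t) <= Rabs (x1 s - X1 n s) + Rabs (x1 s - x1 t)) by
        (replace (X1 n s - x1 t) with (- (x1 s - X1 n s) + (x1 s - x1 t)) by ring;
         eapply Rle_trans; [apply Rabs_triang| rewrite Rabs_Ropp; lra]).
      assert (Rabs (X2 n s - x2 t) <= Rabs (x2 s - X2 n s) + Rabs (x2 s - x2 t)) by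
        (replace (X2 n s - x2 t) with (- (x2 s - X2 n s) + (x2 s - x2 t)) by ring;
         eapply Rle_trans; [apply Rabs_triang| rewrite Rabs_Ropp; lra]).
      fold PL in T1, T2. lra. }
    split.
    + apply (deriv_from_approx (fun n => X1 (S n)) x1 (fun n s => G1 (X1 n s) (X2 n s)) _ t (2 * L0 * B)
               (fun n => L0 * (2 * (PL - PP K Lg (2*t) n)))); auto.
      * nra.
      * intros n s. apply Dr.
      * intros s Hs. apply (is_lim_seq_incr_1 (fun n => X1 n s)). apply (Cv s s). lra.
      * intros n s Hs. eapply Rle_trans; [apply H1|]. specialize (Bnd n s Hs).
        apply (Rmult_le_compat_l L0) in Bnd; auto. lra.
    + apply (deriv_from_approx (fun n => X2 (S n)) x2 (fun n s => G2 (X1 n s) (X2 n s)) _ t (2 * L0 * B)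
               (fun n => L0 * (2 * (PL - PP K Lg (2*t) n)))); auto.
      * nra.
      * intros n s. apply Dr.
      * intros s Hs. apply (is_lim_seq_incr_1 (fun n => X2 n s)). apply (Cv s s). lra.
      * intros n s Hs. eapply Rle_trans; [apply H2|]. specialize (Bnd n s Hs).
        apply (Rmult_le_compat_l L0) in Bnd; auto. lra.
Qed.

Lemma Phi1_h l1 x : Phi1 l1 x = / l1 * (exp (- x) - 1 - (- x)).
Proof. unfold Phi1. ring. Qed.
Lemma Phi2_h l2 x : Phi2 l2 x = l2 * (exp x - 1 - x).
Proof. reflexivity. Qed.

Lemma Phi1_nonneg l1 x : 0 < l1 -> 0 <= Phi1 l1 x.
Proof. intros. rewrite Phi1_h. apply Rmult_le_pos; [left; apply Rinv_0_lt_compat; auto| apply h_nonneg]. Qed.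
Lemma Phi2_nonneg l2 x : 0 < l2 -> 0 <= Phi2 l2 x.
Proof. intros. rewrite Phi2_h. apply Rmult_le_pos; [lra| apply h_nonneg]. Qed.

Lemma V1_ge1 l1 l2 eps x1 x2 : 0 < l1 -> 0 < l2 -> 0 < eps -> Phi1 l1 x1 <= V1 l1 l2 eps x1 x2.
Proof. intros. unfold V1. pose proof (Phi2_nonneg l2 x2 H0). nra. Qed.
Lemma V1_ge2 l1 l2 eps x1 x2 : 0 < l1 -> 0 < l2 -> 0 < eps -> Phi2 l2 x2 <= V1 l1 l2 eps x1 x2.
Proof. intros. unfold V1. pose proof (Phi1_nonneg l1 x1 H). pose proof (Phi2_nonneg l2 x2 H0). nra. Qed.
Lemma V1_nonneg l1 l2 eps x1 x2 : 0 < l1 -> 0 < l2 -> 0 < eps -> 0 <= V1 l1 l2 eps x1 x2.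
Proof. intros. pose proof (V1_ge1 l1 l2 eps x1 x2 H H0 H1). pose proof (Phi1_nonneg l1 x1 H). lra. Qed.

Lemma Phi1_lin l1 x : 0 < l1 -> Rabs x - 1 <= l1 * Phi1 l1 x.
Proof. intros. rewrite Phi1_h. pose proof (h_lin (-x)). rewrite Rabs_Ropp in H0.
  replace (l1 * (/ l1 * (exp (- x) - 1 - - x))) with (exp (- x) - 1 - - x) by (field; lra). lra. Qed.
Lemma Phi2_lin l2 x : 0 < l2 -> l2 * (Rabs x - 1) <= Phi2 l2 x.
Proof. intros. rewrite Phi2_h. pose proof (h_lin x). apply Rmult_le_compat_l; lra. Qed.

Lemma Phi1_min l1 x : 0 < l1 -> Rmin (x^2) 1 / (4 * l1) <= Phi1 l1 x.
Proof. intros. rewrite Phi1_h. pose proof (h_min (-x)). replace ((-x)^2) with (x^2) in H0 by ring.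
  replace (Rmin (x^2) 1 / (4 * l1)) with (/ l1 * (Rmin (x^2) 1 / 4)) by (field; lra).
  apply Rmult_le_compat_l; [left; apply Rinv_0_lt_compat; auto| lra]. Qed.
Lemma Phi2_min l2 x : 0 < l2 -> l2 * (Rmin (x^2) 1 / 4) <= Phi2 l2 x.
Proof. intros. rewrite Phi2_h. apply Rmult_le_compat_l; [lra| apply h_min]. Qed.

Lemma Phi1_up l1 x : 0 < l1 -> Rabs x <= 1 -> Phi1 l1 x <= exp 1 / l1 * x^2.
Proof. intros. rewrite Phi1_h. pose proof (h_quad_up (-x) ltac:(rewrite Rabs_Ropp; auto)).
  replace ((-x)^2) with (x^2) in H1 by ring. replace (exp 1 / l1 * x^2) with (/l1 * (exp 1 * x^2)) by (field; lra).
  apply Rmult_le_compat_l; [left; apply Rinv_0_lt_compat; auto| lra]. Qed.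
Lemma Phi2_up l2 x : 0 < l2 -> Rabs x <= 1 -> Phi2 l2 x <= l2 * exp 1 * x^2.
Proof. intros. rewrite Phi2_h. pose proof (h_quad_up x H0). rewrite Rmult_assoc. apply Rmult_le_compat_l; lra. Qed.

Lemma Phi1_qlow l1 x : 0 < l1 -> Rabs x <= 1 -> x^2 / (4 * l1) <= Phi1 l1 x.
Proof. intros. rewrite Phi1_h. apply Rabs_le_inv in H0. pose proof (h_quad_low (-x) ltac:(lra)).
  replace ((-x)^2) with (x^2) in H1 by ring.
  replace (x^2 / (4 * l1)) with (/ l1 * (x^2 / 4)) by (field; lra).
  apply Rmult_le_compat_l; [left; apply Rinv_0_lt_compat; auto| lra]. Qed.
Lemma Phi2_qlow l2 x : 0 < l2 -> Rabs x <= 1 -> l2 * (x^2 / 4) <= Phi2 l2 x.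
Proof. intros. rewrite Phi2_h. apply Rabs_le_inv in H0. apply Rmult_le_compat_l; [lra| apply h_quad_low; lra]. Qed.

Lemma sq_abs x : Rabs x ^ 2 = x ^ 2.
Proof. unfold Rabs; destruct Rcase_abs; ring. Qed.

Lemma phi1_low l1 x : 0 < l1 -> Rabs x <= 1 -> x^2 * (exp (-1) / l1)^2 <= phi1 l1 x ^2.
Proof.
  intros. pose proof (em1_low (-x) ltac:(rewrite Rabs_Ropp; auto)). rewrite Rabs_Ropp in H1.
  unfold phi1. replace (/ l1 * (1 - exp (- x))) with (- (exp (-x) - 1) / l1) by (field; lra).
  replace ((- (exp (- x) - 1) / l1)^2) with ((Rabs (exp (-x) - 1))^2 / l1^2) by (rewrite sq_abs; field; lra).
  replace (x^2) with (Rabs x ^2) by (rewrite sq_abs; auto).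
  replace (Rabs x ^ 2 * (exp (-1) / l1)^2) with ((Rabs x * exp (-1))^2 / l1^2) by (field; lra).
  unfold Rdiv. apply Rmult_le_compat_r; [left; apply Rinv_0_lt_compat; nra|].
  pose proof (Rabs_pos x). pose proof (exp_pos (-1)). apply pow_incr. split; [nra| auto].
Qed.

Lemma phi2_low l2 x : 0 < l2 -> Rabs x <= 1 -> x^2 * (l2 * exp (-1))^2 <= phi2 l2 x ^2.
Proof.
  intros. pose proof (em1_low x H0). unfold phi2.
  replace ((l2 * (exp x - 1))^2) with (l2^2 * (Rabs (exp x - 1))^2) by (rewrite sq_abs; ring).
  replace (x^2) with (Rabs x ^2) by (rewrite sq_abs; auto).
  replace (Rabs x ^ 2 * (l2 * exp (-1))^2) with (l2^2 * (Rabs x * exp (-1))^2) by ring.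
  apply Rmult_le_compat_l; [nra|].
  pose proof (Rabs_pos x). pose proof (exp_pos (-1)). apply pow_incr. split; [nra| auto].
Qed.

Lemma phi1_far l1 r x : 0 < l1 -> 0 < r -> r <= Rabs x -> ((1 - exp (-r)) / l1)^2 <= phi1 l1 x ^2.
Proof.
  intros. pose proof (em1_far r (-x) H0 ltac:(rewrite Rabs_Ropp; auto)).
  assert (0 <= 1 - exp (-r)) by (pose proof (exp_le1 (-r) ltac:(lra)); lra).
  unfold phi1. replace (/ l1 * (1 - exp (- x))) with (- (exp (-x) - 1) / l1) by (field; lra).
  replace ((- (exp (- x) - 1) / l1)^2) with ((Rabs (exp (-x) - 1))^2 / l1^2) by (rewrite sq_abs; field; lra).
  replace (((1 - exp (- r)) / l1) ^ 2) with ((1 - exp (-r))^2 / l1^2) by (field; lra).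
  unfold Rdiv. apply Rmult_le_compat_r; [left; apply Rinv_0_lt_compat; nra|].
  apply pow_incr. lra.
Qed.

Lemma phi2_far l2 r x : 0 < l2 -> 0 < r -> r <= Rabs x -> (l2 * (1 - exp (-r)))^2 <= phi2 l2 x ^2.
Proof.
  intros. pose proof (em1_far r x H0 H1).
  assert (0 <= 1 - exp (-r)) by (pose proof (exp_le1 (-r) ltac:(lra)); lra).
  unfold phi2.
  replace ((l2 * (exp x - 1))^2) with (l2^2 * (Rabs (exp x - 1))^2) by (rewrite sq_abs; ring).
  rewrite Rpow_mult_distr. apply Rmult_le_compat_l; [nra|]. apply pow_incr. lra.
Qed.

Definition th (c v : R) : R := Rmax 0 (Rmin 1 (c - v)).

Lemma th_lip c u v : Rabs (th c u - th c v) <= Rabs (u - v).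
Proof. unfold th, Rmax, Rmin. repeat destruct Rle_dec; unfold Rabs; repeat destruct Rcase_abs; lra. Qed.
Lemma th_nonneg c v : 0 <= th c v.
Proof. unfold th. apply Rmax_l. Qed.
Lemma th_one c v : v <= c - 1 -> th c v = 1.
Proof. intros. unfold th, Rmax, Rmin. repeat destruct Rle_dec; lra. Qed.
Lemma th_zero c v : c <= v -> th c v = 0.
Proof. intros. unfold th, Rmax, Rmin. repeat destruct Rle_dec; lra. Qed.

Lemma BL_th c f : BL f -> BL (fun x1 x2 => th c (f x1 x2)).
Proof. apply BL_lip1. apply th_lip. Qed.

Definition Gs1 l1 l2 us eps beta c M x1 x2 :=
  th c (V1 l1 l2 eps (cl M x1) (cl M x2)) * f1 l1 l2 us eps beta (cl M x1) (cl M x2).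
Definition Gs2 l1 l2 us eps beta c M x1 x2 :=
  th c (V1 l1 l2 eps (cl M x1) (cl M x2)) * f2 l1 l2 us eps beta (cl M x1) (cl M x2).

Ltac bl HM := repeat first [ apply BL_th | apply BL_mult | apply BL_minus | apply BL_plus | apply BL_opp
   | apply BL_exp | apply (BL_cl1 _ HM) | apply (BL_cl2 _ HM) | apply BL_const ].

Lemma Gs_hyp l1 l2 us eps beta c M : 0 <= M ->
  exists L0 B, Hyp (Gs1 l1 l2 us eps beta c M) (Gs2 l1 l2 us eps beta c M) L0 B.
Proof.
  intros HM.
  assert (Hb1 : BL (Gs1 l1 l2 us eps beta c M)).
  { unfold Gs1, V1, Phi1, Phi2, f1, ufb, phi1, phi2. bl HM. }
  assert (Hb2 : BL (Gs2 l1 l2 us eps beta c M)).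
  { unfold Gs2, V1, Phi1, Phi2, f2, ufb, phi1, phi2. bl HM. }
  destruct Hb1 as [L1 [B1 [HL1 [Hl1 Hbb1]]]]. destruct Hb2 as [L2 [B2 [HL2 [Hl2 Hbb2]]]].
  exists (Rmax L1 L2), (Rmax B1 B2). unfold Hyp, LipG.
  assert (HB1 : 0 <= B1) by (eapply Rle_trans; [apply Rabs_pos| apply (Hbb1 0 0)]).
  pose proof (Rmax_l L1 L2). pose proof (Rmax_r L1 L2). pose proof (Rmax_l B1 B2). pose proof (Rmax_r B1 B2).
  split; [lra| split; [lra| split; [| split; [| split]]]]; intros.
  - eapply Rle_trans; [apply Hl1|]. apply Rmult_le_compat_r; auto.
    pose proof (Rabs_pos (x1 - y1)); pose proof (Rabs_pos (x2 - y2)); lra.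
  - eapply Rle_trans; [apply Hl2|]. apply Rmult_le_compat_r; auto.
    pose proof (Rabs_pos (x1 - y1)); pose proof (Rabs_pos (x2 - y2)); lra.
  - specialize (Hbb1 x1 x2); lra.
  - specialize (Hbb2 x1 x2); lra.
Qed.

Lemma sol_exists l1 l2 us eps beta : 0 < l1 -> 0 < l2 -> 0 < us -> 0 < eps -> eps / (4 * (1 + eps)) < beta ->
  forall a b, exists e1 e2, is_solution l1 l2 us eps beta e1 e2 /\ e1 0 = a /\ e2 0 = b.
Proof.
  intros Hl1 Hl2 Hus He Hb a b.
  set (V0 := V1 l1 l2 eps a b). set (c := V0 + 2). set (M := 1 + (V0 + 2) * (l1 + / l2)).
  assert (HV0 : 0 <= V0) by (apply V1_nonneg; auto).
  assert (Hil2 : 0 < / l2) by (apply Rinv_0_lt_compat; auto).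
  assert (HM : 0 <= M) by (unfold M; nra).
  assert (box : forall p q, V1 l1 l2 eps p q < c -> Rabs p < M /\ Rabs q < M).
  { intros p q Hv. pose proof (V1_ge1 l1 l2 eps p q Hl1 Hl2 He). pose proof (V1_ge2 l1 l2 eps p q Hl1 Hl2 He).
    pose proof (Phi1_lin l1 p Hl1). pose proof (Phi2_lin l2 q Hl2). unfold M. split.
    - assert (l1 * Phi1 l1 p < l1 * c) by (apply Rmult_lt_compat_l; lra). unfold c in *. nra.
    - assert (Rabs q - 1 <= / l2 * Phi2 l2 q).
      { apply (Rmult_le_reg_l l2); auto. rewrite <- Rmult_assoc, Rinv_r, Rmult_1_l by lra. lra. }
      assert (/ l2 * Phi2 l2 q < / l2 * c) by (apply Rmult_lt_compat_l; lra). unfold c in *. nra. }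
  assert (edge : forall p q, ~ (Rabs p <= M /\ Rabs q <= M) -> c <= V1 l1 l2 eps (cl M p) (cl M q)).
  { intros p q Hn. destruct (Rlt_or_le (V1 l1 l2 eps (cl M p) (cl M q)) c) as [Hlt|Hle]; auto.
    destruct (box _ _ Hlt) as [B1 B2]. exfalso. apply Hn.
    destruct (Rle_or_lt (Rabs p) M) as [P1|P1]; [|rewrite (cl_edge M p HM P1) in B1; lra].
    destruct (Rle_or_lt (Rabs q) M) as [P2|P2]; [|rewrite (cl_edge M q HM P2) in B2; lra]. auto. }
  destruct (Gs_hyp l1 l2 us eps beta c M HM) as [L0 [B Hh]].
  destruct (ode_exists _ _ L0 B a b Hh) as [x1 [x2 [Z1 [Z2 [R1 [R2 Dx]]]]]].
  assert (Wm : forall t, 0 <= t -> V1 l1 l2 eps (x1 t) (x2 t) <= V0).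
  { intros t Ht. unfold V0. rewrite <- Z1, <- Z2.
    apply (mono_open (fun t => V1 l1 l2 eps (x1 t) (x2 t))
      (fun t => phi1 l1 (x1 t) * Gs1 l1 l2 us eps beta c M (x1 t) (x2 t) + (1+eps) * (phi2 l2 (x2 t) * Gs2 l1 l2 us eps beta c M (x1 t) (x2 t)))); auto.
    - intros s Hs. destruct (Dx s Hs). apply derive_V1; auto.
    - intros s Hs. unfold Gs1, Gs2.
      destruct (classic (Rabs (x1 s) <= M /\ Rabs (x2 s) <= M)) as [[P1 P2]|Pn].
      + rewrite (cl_id M _ P1), (cl_id M _ P2).
        pose proof (Vdot_nonpos l1 l2 us eps beta (x1 s) (x2 s) Hl1 Hl2 He Hb). unfold Vdot in H.
        pose proof (th_nonneg c (V1 l1 l2 eps (x1 s) (x2 s))).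
        set (T := th c (V1 l1 l2 eps (x1 s) (x2 s))) in *.
        replace (phi1 l1 (x1 s) * (T * f1 l1 l2 us eps beta (x1 s) (x2 s)) + (1 + eps) * (phi2 l2 (x2 s) * (T * f2 l1 l2 us eps beta (x1 s) (x2 s))))
          with (T * (phi1 l1 (x1 s) * f1 l1 l2 us eps beta (x1 s) (x2 s) + (1 + eps) * (phi2 l2 (x2 s) * f2 l1 l2 us eps beta (x1 s) (x2 s)))) by ring.
        nra.
      + rewrite (th_zero c _ (edge _ _ Pn)). lra.
    - apply RC_V1; auto. }
  exists x1, x2. split; [| auto].
  assert (Geq : forall t, 0 < t -> Gs1 l1 l2 us eps beta c M (x1 t) (x2 t) = f1 l1 l2 us eps beta (x1 t) (x2 t) /\
                                 Gs2 l1 l2 us eps beta c M (x1 t) (x2 t) = f2 l1 l2 us eps beta (x1 t) (x2 t)).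
  { intros t Ht. specialize (Wm t ltac:(lra)).
    destruct (box (x1 t) (x2 t) ltac:(unfold c; lra)) as [P1 P2].
    unfold Gs1, Gs2. rewrite (cl_id M (x1 t)) by lra. rewrite (cl_id M (x2 t)) by lra.
    rewrite th_one by (unfold c; lra). split; ring. }
  split; [| split; apply filterlim_of_RC; auto].
  intros t Ht. destruct (Dx t Ht) as [D1 D2]. destruct (Geq t Ht) as [E1 E2]. rewrite <- E1, <- E2. auto.
Qed.

Lemma norm2_abs1 x1 x2 : Rabs x1 <= norm2 x1 x2.
Proof. unfold norm2. rewrite <- sqrt_Rsqr_abs. apply sqrt_le_1_alt. unfold Rsqr. pose proof (pow2_ge_0 x2). simpl. nra. Qed.
Lemma norm2_abs2 x1 x2 : Rabs x2 <= norm2 x1 x2.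
Proof. unfold norm2. rewrite <- sqrt_Rsqr_abs. apply sqrt_le_1_alt. unfold Rsqr. pose proof (pow2_ge_0 x1). simpl. nra. Qed.
Lemma norm2_sq x1 x2 : norm2 x1 x2 ^ 2 = x1^2 + x2^2.
Proof. unfold norm2. apply pow2_sqrt. pose proof (pow2_ge_0 x1). pose proof (pow2_ge_0 x2). lra. Qed.
Lemma norm2_pos x1 x2 : 0 <= norm2 x1 x2.
Proof. apply sqrt_pos. Qed.
Lemma norm2_lt x1 x2 r : Rabs x1 < r/2 -> Rabs x2 < r/2 -> norm2 x1 x2 < r.
Proof.
  intros H1 H2. assert (0 < r) by (pose proof (Rabs_pos x1); lra).
  unfold norm2. rewrite <- (sqrt_pow2 r) by lra. apply sqrt_lt_1_alt.
  rewrite <- (sq_abs x1), <- (sq_abs x2). pose proof (Rabs_pos x1). pose proof (Rabs_pos x2).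
  pose proof (pow2_ge_0 (Rabs x1)). pose proof (pow2_ge_0 (Rabs x2)).
  split; [lra|]. simpl. nra.
Qed.

Lemma V_small l1 l2 eps rho : 0 < l1 -> 0 < l2 -> 0 < eps -> 0 < rho <= 1 ->
  exists delta, 0 < delta /\ forall p q, V1 l1 l2 eps p q < delta -> Rabs p < rho /\ Rabs q < rho.
Proof.
  intros H1 H2 He Hr. exists (Rmin (rho^2 / (4 * l1)) (l2 * (rho^2 / 4))). split.
  { assert (0 < rho^2) by (apply pow_lt; lra). apply Rmin_case; [apply Rdiv_lt_0_compat; lra| apply Rmult_lt_0_compat; lra]. }
  intros p q Hv. pose proof (V1_ge1 l1 l2 eps p q H1 H2 He). pose proof (V1_ge2 l1 l2 eps p q H1 H2 He).
  pose proof (Rmin_l (rho^2 / (4 * l1)) (l2 * (rho^2 / 4))). pose proof (Rmin_r (rho^2 / (4 * l1)) (l2 * (rho^2 / 4))).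
  split.
  - destruct (Rlt_or_le (Rabs p) rho) as [|Hp]; auto. exfalso.
    assert (rho^2 <= Rmin (p^2) 1) by (apply Rmin_glb; [rewrite <- (sq_abs p); apply pow_incr; split; lra| simpl; nra]).
    pose proof (Phi1_min l1 p H1).
    assert (rho^2 / (4 * l1) <= Rmin (p^2) 1 / (4 * l1)) by (unfold Rdiv; apply Rmult_le_compat_r; [left; apply Rinv_0_lt_compat; lra| auto]).
    lra.
  - destruct (Rlt_or_le (Rabs q) rho) as [|Hq]; auto. exfalso.
    assert (rho^2 <= Rmin (q^2) 1) by (apply Rmin_glb; [rewrite <- (sq_abs q); apply pow_incr; split; lra| simpl; nra]).
    pose proof (Phi2_min l2 q H2). nra.
Qed.

Lemma V_quad_up l1 l2 eps p q : 0 < l1 -> 0 < l2 -> 0 < eps -> Rabs p <= 1 -> Rabs q <= 1 ->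
  V1 l1 l2 eps p q <= (exp 1 / l1 + (1 + eps) * (l2 * exp 1)) * (p^2 + q^2).
Proof.
  intros H1 H2 He Hp Hq. unfold V1. pose proof (Phi1_up l1 p H1 Hp). pose proof (Phi2_up l2 q H2 Hq).
  pose proof (pow2_ge_0 p). pose proof (pow2_ge_0 q).
  assert (0 <= exp 1 / l1) by (apply Rdiv_le_0_compat; [pose proof (exp_pos 1); lra| lra]).
  pose proof (exp_pos 1).
  assert ((1+eps) * Phi2 l2 q <= (1+eps) * (l2 * exp 1 * q^2)) by (apply Rmult_le_compat_l; lra).
  assert (0 <= exp 1 / l1 * q^2) by (apply Rmult_le_pos; lra).
  assert (0 <= (1 + eps) * (l2 * exp 1) * p^2) by (apply Rmult_le_pos; [apply Rmult_le_pos; [lra| apply Rmult_le_pos; lra]| lra]).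
  nra.
Qed.

Lemma V_quad_low l1 l2 eps p q : 0 < l1 -> 0 < l2 -> 0 < eps -> Rabs p <= 1 -> Rabs q <= 1 ->
  Rmin (/ (4 * l1)) (l2 / 4) * (p^2 + q^2) <= V1 l1 l2 eps p q.
Proof.
  intros H1 H2 He Hp Hq. unfold V1. pose proof (Phi1_qlow l1 p H1 Hp). pose proof (Phi2_qlow l2 q H2 Hq).
  pose proof (pow2_ge_0 p). pose proof (pow2_ge_0 q). pose proof (Phi2_nonneg l2 q H2).
  pose proof (Rmin_l (/ (4 * l1)) (l2 / 4)). pose proof (Rmin_r (/ (4 * l1)) (l2 / 4)).
  set (m := Rmin (/ (4 * l1)) (l2 / 4)) in *.
  assert (m * p^2 <= p^2 / (4 * l1)) by (unfold Rdiv; rewrite (Rmult_comm (p^2)); apply Rmult_le_compat_r; auto).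
  assert (m * q^2 <= l2 * (q^2/4)) by nra.
  nra.
Qed.

Lemma V_cont0 l1 l2 eps delta : 0 < l1 -> 0 < l2 -> 0 < eps -> 0 < delta ->
  exists d, 0 < d <= 1 /\ forall p q, Rabs p < d -> Rabs q < d -> V1 l1 l2 eps p q < delta.
Proof.
  intros H1 H2 He Hd. set (C2 := exp 1 / l1 + (1 + eps) * (l2 * exp 1)).
  assert (HC2 : 0 < C2) by (unfold C2; pose proof (exp_pos 1); assert (0 < exp 1 / l1) by (apply Rdiv_lt_0_compat; lra);
    assert (0 < (1+eps)*(l2*exp 1)) by (apply Rmult_lt_0_compat; [lra| apply Rmult_lt_0_compat; lra]); lra).
  exists (Rmin 1 (delta / (2 * C2 + 1))). split.
  { split; [apply Rmin_case; [lra| apply Rdiv_lt_0_compat; lra]| apply Rmin_l]. }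
  intros p q Hp Hq. pose proof (Rmin_l 1 (delta / (2 * C2 + 1))). pose proof (Rmin_r 1 (delta / (2 * C2 + 1))).
  set (d := Rmin 1 (delta / (2 * C2 + 1))) in *.
  pose proof (V_quad_up l1 l2 eps p q H1 H2 He ltac:(lra) ltac:(lra)). fold C2 in H3.
  rewrite <- (sq_abs p), <- (sq_abs q) in H3. pose proof (Rabs_pos p). pose proof (Rabs_pos q).
  assert (Rabs p ^2 < d) by (simpl; nra). assert (Rabs q ^2 < d) by (simpl; nra).
  assert (C2 * (2 * d) < delta).
  { assert (C2 * (2 * d) <= 2 * C2 * (delta / (2 * C2 + 1))) by nra.
    assert (2 * C2 * (delta / (2 * C2 + 1)) < delta).
    { replace (2 * C2 * (delta / (2 * C2 + 1))) with (delta * (2 * C2 / (2 * C2 + 1))) by (field; lra).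
      assert (2 * C2 / (2 * C2+1) < 1) by (apply (Rmult_lt_reg_r (2 * C2+1)); [lra|]; unfold Rdiv; rewrite Rmult_assoc, Rinv_l by lra; lra).
      nra. }
    lra. }
  nra.
Qed.

Lemma lyap_mono l1 l2 us eps beta e1 e2 : 0 < l1 -> 0 < l2 -> 0 < eps -> eps / (4 * (1 + eps)) < beta ->
  is_solution l1 l2 us eps beta e1 e2 ->
  forall s t, 0 <= s <= t -> V1 l1 l2 eps (e1 t) (e2 t) <= V1 l1 l2 eps (e1 s) (e2 s).
Proof.
  intros H1 H2 He Hb Hs s t Hst. destruct (Req_dec s 0) as [->|Hs0].
  - apply (lyap_sol l1 l2 us eps beta); auto; lra.
  - assert (- V1 l1 l2 eps (e1 s) (e2 s) <= - V1 l1 l2 eps (e1 t) (e2 t)); [|lra].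
    apply (mono_closed (fun x => - V1 l1 l2 eps (e1 x) (e2 x)) (fun x => - Vdot l1 l2 us eps beta (e1 x) (e2 x)) s t); [lra| |].
    + intros x Hx. apply (is_derive_opp (fun x => V1 l1 l2 eps (e1 x) (e2 x))). apply sol_derive_V; auto; lra.
    + intros x Hx. pose proof (Vdot_nonpos l1 l2 us eps beta (e1 x) (e2 x) H1 H2 He Hb). lra.
Qed.

Lemma is_derive_plusR (f g : R -> R) x df dg : is_derive f x df -> is_derive g x dg -> is_derive (fun t => f t + g t) x (df + dg).
Proof. intros H1 H2. exact (is_derive_plus f g x df dg H1 H2). Qed.
Lemma is_derive_multR (f g : R -> R) x df dg : is_derive f x df -> is_derive g x dg -> is_derive (fun t => f t * g t) x (df * g x + f x * dg).
Proof. intros H1 H2. exact (is_derive_mult f g x df dg H1 H2 (fun _ _ => Rmult_comm _ _)). Qed.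

Lemma RC_mult f g : RC f -> RC g -> RC (fun t => f t * g t).
Proof.
  intros Hf Hg eps Heps.
  set (e := Rmin 1 (eps / (Rabs (f 0) + Rabs (g 0) + 2))).
  assert (He : 0 < e) by (unfold e; apply Rmin_case; [lra| apply Rdiv_lt_0_compat; [lra| pose proof (Rabs_pos (f 0)); pose proof (Rabs_pos (g 0)); lra]]).
  destruct (Hf e He) as [d1 [Hd1 K1]]. destruct (Hg e He) as [d2 [Hd2 K2]].
  exists (Rmin d1 d2). split; [apply Rmin_case; lra|]. intros s Hs.
  assert (s < d1) by (eapply Rlt_le_trans; [apply Hs| apply Rmin_l]).
  assert (s < d2) by (eapply Rlt_le_trans; [apply Hs| apply Rmin_r]).
  specialize (K1 s ltac:(lra)). specialize (K2 s ltac:(lra)).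
  replace (f s * g s - f 0 * g 0) with ((f s - f 0) * (g s - g 0) + (f s - f 0) * g 0 + f 0 * (g s - g 0)) by ring.
  pose proof (Rabs_pos (f 0)). pose proof (Rabs_pos (g 0)). pose proof (Rabs_pos (f s - f 0)). pose proof (Rabs_pos (g s - g 0)).
  assert (e <= 1) by apply Rmin_l.
  assert (Hee : e * (Rabs (f 0) + Rabs (g 0) + 2) <= eps).
  { assert (Hm : e <= eps / (Rabs (f 0) + Rabs (g 0) + 2)) by apply Rmin_r.
    apply (Rmult_le_compat_r (Rabs (f 0) + Rabs (g 0) + 2)) in Hm; [|lra].
    replace (eps / (Rabs (f 0) + Rabs (g 0) + 2) * (Rabs (f 0) + Rabs (g 0) + 2)) with eps in Hm by (field; lra). lra. }
  assert (T3: forall X Y Z, Rabs (X+Y+Z) <= Rabs X + Rabs Y + Rabs Z) by (intros; unfold Rabs; repeat destruct Rcase_abs; lra).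
  eapply Rle_lt_trans; [apply T3|]. rewrite !Rabs_mult.
  assert (Rabs (f s - f 0) * Rabs (g s - g 0) <= e * e) by (apply Rmult_le_compat; lra).
  assert (Rabs (f s - f 0) * Rabs (g 0) <= e * Rabs (g 0)) by (apply Rmult_le_compat_r; lra).
  assert (Rabs (f 0) * Rabs (g s - g 0) <= Rabs (f 0) * e) by (apply Rmult_le_compat_l; lra).
  assert (Rabs (f s - f 0) * Rabs (g 0) < e * Rabs (g 0) + e) by lra.
  nra.
Qed.

Lemma part_stab l1 l2 us eps beta : 0 < l1 -> 0 < l2 -> 0 < eps -> eps / (4 * (1 + eps)) < beta ->
  forall r, 0 < r -> exists d, 0 < d /\
     forall e1 e2, is_solution l1 l2 us eps beta e1 e2 ->
       norm2 (e1 0) (e2 0) < d -> forall t, 0 <= t -> norm2 (e1 t) (e2 t) < r.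
Proof.
  intros H1 H2 He Hb r Hr.
  destruct (V_small l1 l2 eps (Rmin 1 (r/2)) H1 H2 He) as [delta [Hd Hsm]].
  { split; [apply Rmin_case; lra| apply Rmin_l]. }
  destruct (V_cont0 l1 l2 eps delta H1 H2 He Hd) as [d [Hd1 Hc]].
  exists d. split; [lra|]. intros e1 e2 Hs Hn t Ht.
  pose proof (norm2_abs1 (e1 0) (e2 0)). pose proof (norm2_abs2 (e1 0) (e2 0)).
  assert (W0 := Hc (e1 0) (e2 0) ltac:(lra) ltac:(lra)).
  pose proof (lyap_sol l1 l2 us eps beta e1 e2 H1 H2 He Hb Hs t Ht).
  destruct (Hsm (e1 t) (e2 t) ltac:(lra)) as [P1 P2].
  pose proof (Rmin_r 1 (r/2)). apply norm2_lt; lra.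
Qed.

Lemma part_conv l1 l2 us eps beta : 0 < l1 -> 0 < l2 -> 0 < eps -> eps / (4 * (1 + eps)) < beta ->
  forall e1 e2, is_solution l1 l2 us eps beta e1 e2 ->
     is_lim (fun t => norm2 (e1 t) (e2 t)) p_infty 0.
Proof.
  intros H1 H2 He Hb e1 e2 Hs.
  assert (Key : forall r, 0 < r -> exists T, forall t, T < t -> norm2 (e1 t) (e2 t) < r).
  { intros r Hr.
    destruct (V_small l1 l2 eps (Rmin 1 (r/2)) H1 H2 He) as [delta [Hd Hsm]].
    { split; [apply Rmin_case; lra| apply Rmin_l]. }
    assert (Ex : exists t0, 0 <= t0 /\ V1 l1 l2 eps (e1 t0) (e2 t0) < delta).
    { apply NNPP. intros Hn.
      assert (Hall : forall t, 0 <= t -> delta <= V1 l1 l2 eps (e1 t) (e2 t)).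
      { intros t Ht. destruct (Rle_or_lt delta (V1 l1 l2 eps (e1 t) (e2 t))); auto. exfalso. apply Hn. exists t; auto. }
      destruct (V_cont0 l1 l2 eps delta H1 H2 He Hd) as [d [Hd1 Hc]].
      destruct (Vdot_le l1 l2 us eps beta H1 H2 He Hb) as [mu [Hmu Hv]].
      assert (Hed : 0 < 1 - exp (-d)) by (assert (exp (-d) < exp 0) by (apply exp_increasing; lra); rewrite exp_0 in H; lra).
      set (c := Rmin (((1 - exp (-d)) / l1)^2) ((l2 * (1 - exp (-d)))^2)).
      assert (Hc0 : 0 < c).
      { unfold c. apply Rmin_case; apply pow_lt; [apply Rdiv_lt_0_compat| apply Rmult_lt_0_compat]; lra. }
      assert (Hphi : forall t, 0 < t -> c <= phi1 l1 (e1 t) ^2 + phi2 l2 (e2 t) ^2).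
      { intros t Ht. specialize (Hall t ltac:(lra)).
        pose proof (pow2_ge_0 (phi1 l1 (e1 t))). pose proof (pow2_ge_0 (phi2 l2 (e2 t))).
        pose proof (Rmin_l (((1 - exp (-d)) / l1)^2) ((l2 * (1 - exp (-d)))^2)).
        pose proof (Rmin_r (((1 - exp (-d)) / l1)^2) ((l2 * (1 - exp (-d)))^2)). fold c in H3, H4.
        destruct (Rlt_or_le (Rabs (e1 t)) d) as [P1|P1].
        - destruct (Rlt_or_le (Rabs (e2 t)) d) as [P2|P2].
          + specialize (Hc _ _ P1 P2). lra.
          + pose proof (phi2_far l2 d (e2 t) H2 ltac:(lra) P2). lra.
        - pose proof (phi1_far l1 d (e1 t) H1 ltac:(lra) P1). lra. }
      assert (Mo : forall t, 0 <= t -> V1 l1 l2 eps (e1 t) (e2 t) + mu * c * t <= V1 l1 l2 eps (e1 0) (e2 0) + mu * c * 0).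
      { apply (mono_open (fun t => V1 l1 l2 eps (e1 t) (e2 t) + mu * c * t)
                         (fun t => Vdot l1 l2 us eps beta (e1 t) (e2 t) + mu * c)).
        - intros t Ht. apply is_derive_plusR.
          + apply sol_derive_V; auto.
          + auto_derive; auto. ring.
        - intros t Ht. specialize (Hv (e1 t) (e2 t)). specialize (Hphi t Ht). nra.
        - apply RC_plus.
          + destruct (sol_RC _ _ _ _ _ _ _ Hs). apply RC_V1; auto.
          + apply RC_scal. apply RC_id. }
      set (W0 := V1 l1 l2 eps (e1 0) (e2 0)).
      assert (Hmc : 0 < mu * c) by nra.
      set (t := (W0 + 1) / (mu * c)).
      assert (HW0 : 0 <= W0) by (apply V1_nonneg; auto).
      assert (Ht : 0 <= t) by (unfold t; apply Rdiv_le_0_compat; lra).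
      specialize (Mo t Ht). fold W0 in Mo.
      assert (mu * c * t = W0 + 1) by (unfold t; field; lra).
      pose proof (V1_nonneg l1 l2 eps (e1 t) (e2 t) H1 H2 He). lra. }
    destruct Ex as [t0 [Ht0 Hw]]. exists t0. intros t Ht.
    pose proof (lyap_mono l1 l2 us eps beta e1 e2 H1 H2 He Hb Hs t0 t ltac:(lra)).
    destruct (Hsm (e1 t) (e2 t) ltac:(lra)) as [P1 P2].
    pose proof (Rmin_r 1 (r/2)). apply norm2_lt; lra. }
  unfold is_lim. apply filterlim_locally. intros [r Hr]. destruct (Key r Hr) as [T HT].
  exists T. intros t Ht. unfold ball; simpl; unfold AbsRing_ball, abs, minus, plus, opp; simpl.
  rewrite Ropp_0, Rplus_0_r, Rabs_right by (apply Rle_ge, norm2_pos). apply HT; auto.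
Qed.

Lemma part_LES l1 l2 us eps beta : 0 < l1 -> 0 < l2 -> 0 < eps -> eps / (4 * (1 + eps)) < beta ->
  LES l1 l2 us eps beta.
Proof.
  intros H1 H2 He Hb.
  set (C1 := Rmin (/ (4 * l1)) (l2 / 4)).
  set (C2 := exp 1 / l1 + (1 + eps) * (l2 * exp 1)).
  set (C3 := Rmin ((exp (-1) / l1)^2) ((l2 * exp (-1))^2)).
  pose proof (exp_pos 1) as Pe1. pose proof (exp_pos (-1)) as Pem1.
  assert (HC1 : 0 < C1) by (unfold C1; apply Rmin_case; [apply Rinv_0_lt_compat| ]; lra).
  assert (HC2 : 0 < C2) by (unfold C2; assert (0 < exp 1 / l1) by (apply Rdiv_lt_0_compat; lra);
    assert (0 < (1+eps)*(l2*exp 1)) by (apply Rmult_lt_0_compat; [lra| apply Rmult_lt_0_compat; lra]); lra).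
  assert (HC3 : 0 < C3) by (unfold C3; apply Rmin_case; apply pow_lt; [apply Rdiv_lt_0_compat| apply Rmult_lt_0_compat]; lra).
  destruct (Vdot_le l1 l2 us eps beta H1 H2 He Hb) as [mu [Hmu Hv]].
  set (ka := mu * C3 / C2).
  assert (Hka : 0 < ka) by (unfold ka; apply Rdiv_lt_0_compat; [nra| lra]).
  destruct (V_small l1 l2 eps 1 H1 H2 He ltac:(lra)) as [d1 [Hd1 Hsm]].
  set (d := Rmin 1 (d1 / (C2 + 1))).
  assert (Hd : 0 < d) by (unfold d; apply Rmin_case; [lra| apply Rdiv_lt_0_compat; lra]).
  exists d, (1 + C2 / C1), (ka / 2).
  assert (HCC : 0 < C2 / C1) by (apply Rdiv_lt_0_compat; lra).
  split; [auto| split; [lra| split; [lra|]]].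
  intros e1 e2 Hs Hn t Ht.
  pose proof (norm2_abs1 (e1 0) (e2 0)). pose proof (norm2_abs2 (e1 0) (e2 0)).
  pose proof (Rmin_l 1 (d1 / (C2 + 1))). pose proof (Rmin_r 1 (d1 / (C2 + 1))). fold d in H3, H4.
  set (N0 := norm2 (e1 0) (e2 0)) in *.
  set (W := fun s => V1 l1 l2 eps (e1 s) (e2 s)).
  assert (HN0 : 0 <= N0) by apply norm2_pos.
  assert (Wup : W 0 <= C2 * N0^2).
  { unfold W, N0. rewrite norm2_sq. apply V_quad_up; auto; lra. }
  assert (Wd1 : W 0 < d1).
  { assert (N0^2 <= N0 * d) by (simpl; nra). assert (N0 * d <= d) by nra.
    assert (C2 * d <= C2 * (d1 / (C2 + 1))) by (apply Rmult_le_compat_l; lra).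
    assert (C2 * (d1 / (C2 + 1)) < d1).
    { replace (C2 * (d1 / (C2 + 1))) with (d1 * (C2 / (C2 + 1))) by (field; lra).
      assert (C2 / (C2+1) < 1) by (apply (Rmult_lt_reg_r (C2+1)); [lra|]; unfold Rdiv; rewrite Rmult_assoc, Rinv_l by lra; lra).
      nra. }
    nra. }
  assert (inb : forall s, 0 <= s -> Rabs (e1 s) <= 1 /\ Rabs (e2 s) <= 1).
  { intros s Hs0. pose proof (lyap_sol l1 l2 us eps beta e1 e2 H1 H2 He Hb Hs s Hs0).
    destruct (Hsm (e1 s) (e2 s)) as [P1 P2]; [unfold W in *; lra| lra]. }
  assert (Vk : forall s, 0 < s -> Vdot l1 l2 us eps beta (e1 s) (e2 s) <= - ka * W s).
  { intros s Hs0. destruct (inb s ltac:(lra)) as [P1 P2].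
    specialize (Hv (e1 s) (e2 s)).
    pose proof (phi1_low l1 (e1 s) H1 P1). pose proof (phi2_low l2 (e2 s) H2 P2).
    pose proof (V_quad_up l1 l2 eps (e1 s) (e2 s) H1 H2 He P1 P2). fold C2 in H7.
    pose proof (Rmin_l ((exp (-1) / l1)^2) ((l2 * exp (-1))^2)). pose proof (Rmin_r ((exp (-1) / l1)^2) ((l2 * exp (-1))^2)).
    fold C3 in H8, H9.
    pose proof (pow2_ge_0 (e1 s)). pose proof (pow2_ge_0 (e2 s)).
    assert (C3 * (e1 s ^2 + e2 s ^2) <= phi1 l1 (e1 s) ^ 2 + phi2 l2 (e2 s) ^ 2) by nra.
    assert (W s / C2 <= e1 s ^2 + e2 s ^2).
    { unfold W. apply (Rmult_le_reg_r C2); auto. unfold Rdiv. rewrite Rmult_assoc, Rinv_l by lra. lra. }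
    assert (ka * W s = mu * C3 * (W s / C2)) by (unfold ka; field; lra).
    assert (mu * C3 * (W s / C2) <= mu * C3 * (e1 s ^2 + e2 s ^2)) by (apply Rmult_le_compat_l; nra).
    nra. }
  assert (Zm : W t * exp (ka * t) <= W 0 * exp (ka * 0)).
  { apply (mono_open (fun s => W s * exp (ka * s)) (fun s => Vdot l1 l2 us eps beta (e1 s) (e2 s) * exp (ka * s) + W s * (ka * exp (ka * s)))); auto.
    - intros s Hs0. apply (is_derive_multR W (fun s => exp (ka * s))).
      + apply sol_derive_V; auto.
      + auto_derive; auto. ring.
    - intros s Hs0. specialize (Vk s Hs0). pose proof (exp_pos (ka * s)).
      replace (Vdot l1 l2 us eps beta (e1 s) (e2 s) * exp (ka * s) + W s * (ka * exp (ka * s)))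
        with ((Vdot l1 l2 us eps beta (e1 s) (e2 s) + ka * W s) * exp (ka * s)) by ring. nra.
    - apply RC_mult.
      + destruct (sol_RC _ _ _ _ _ _ _ Hs). apply RC_V1; auto.
      + apply (RC_comp exp (fun s => ka * s)).
        * eapply CE_of_derive. apply is_derive_exp.
        * apply RC_scal. apply RC_id. }
  rewrite Rmult_0_r, exp_0, Rmult_1_r in Zm.
  assert (Eab : exp (- (ka/2) * t) * exp (- (ka/2) * t) = exp (- ka * t)) by (rewrite <- exp_plus; f_equal; field).
  assert (Ek : exp (ka * t) * exp (- ka * t) = 1) by (rewrite <- exp_plus; replace (ka * t + - ka * t) with 0 by ring; apply exp_0).
  pose proof (exp_pos (- ka * t)). pose proof (exp_pos (ka * t)). pose proof (exp_pos (- (ka/2) * t)).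
  assert (Wt : W t <= W 0 * exp (- ka * t)).
  { assert (W t * exp (ka * t) * exp (- ka * t) <= W 0 * exp (- ka * t)) by (apply Rmult_le_compat_r; lra).
    rewrite Rmult_assoc, Ek, Rmult_1_r in H8. auto. }
  destruct (inb t Ht) as [P1 P2].
  pose proof (V_quad_low l1 l2 eps (e1 t) (e2 t) H1 H2 He P1 P2). fold C1 in H8.
  rewrite <- norm2_sq in H8.
  set (Nt := norm2 (e1 t) (e2 t)) in *. assert (HNt : 0 <= Nt) by apply norm2_pos.
  set (k := 1 + C2 / C1).
  assert (Hk2 : C2 <= C1 * k^2).
  { assert (C1 * (C2 / C1) = C2) by (field; lra). unfold k. nra. }
  set (E := exp (- ka * t)) in *. set (E2 := exp (- (ka / 2) * t)) in *.
  assert (C1 * Nt^2 <= C2 * N0^2 * E).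
  { assert (W 0 * E <= C2 * N0^2 * E) by (apply Rmult_le_compat_r; lra).
    assert (W t = V1 l1 l2 eps (e1 t) (e2 t)) by reflexivity. lra. }
  assert (C1 * Nt^2 <= C1 * (k * N0 * E2)^2).
  { replace ((k * N0 * E2)^2) with (k^2 * N0^2 * E) by (rewrite <- Eab; ring).
    assert (C2 * N0^2 * E <= C1 * k^2 * N0^2 * E) by (pose proof (pow2_ge_0 N0); apply Rmult_le_compat_r; [lra|]; apply Rmult_le_compat_r; lra).
    nra. }
  assert (Hsq : Nt^2 <= (k * N0 * E2)^2) by (apply (Rmult_le_reg_l C1); auto).
  assert (Hp : 0 <= k * N0 * E2) by (unfold k; apply Rmult_le_pos; [apply Rmult_le_pos|]; lra).
  fold Nt. simpl in Hsq. nra.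
Qed.

Lemma part_bnd l1 l2 us eps beta : 0 < l1 -> 0 < l2 -> 0 < us -> 0 < eps -> eps / (4 * (1 + eps)) < beta ->
  forall e1 e2, is_solution l1 l2 us eps beta e1 e2 ->
     exists M, forall t, 0 <= t -> Rabs (ufb l1 l2 us eps beta (e1 t) (e2 t)) <= M.
Proof.
  intros H1 H2 Hus He Hb e1 e2 Hs.
  set (W0 := V1 l1 l2 eps (e1 0) (e2 0)).
  assert (HW0 : 0 <= W0) by (apply V1_nonneg; auto).
  set (R := 1 + l1 * W0 + W0 / l2).
  assert (HR : 0 <= W0 / l2) by (apply Rdiv_le_0_compat; lra).
  exists (us + Rabs beta * ((1 + exp R) / l1 + (1 + eps) * (l2 * (exp R + 1)))).
  intros t Ht. pose proof (lyap_sol l1 l2 us eps beta e1 e2 H1 H2 He Hb Hs t Ht). fold W0 in H.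
  pose proof (V1_ge1 l1 l2 eps (e1 t) (e2 t) H1 H2 He). pose proof (V1_ge2 l1 l2 eps (e1 t) (e2 t) H1 H2 He).
  pose proof (Phi1_lin l1 (e1 t) H1). pose proof (Phi2_lin l2 (e2 t) H2).
  assert (R1 : Rabs (e1 t) <= R).
  { assert (l1 * Phi1 l1 (e1 t) <= l1 * W0) by (apply Rmult_le_compat_l; lra). unfold R. lra. }
  assert (R2 : Rabs (e2 t) <= R).
  { assert (Rabs (e2 t) - 1 <= W0 / l2).
    { apply (Rmult_le_reg_l l2); auto. replace (l2 * (W0 / l2)) with W0 by (field; lra). lra. }
    unfold R. pose proof (Rmult_le_pos l1 W0 ltac:(lra) HW0). lra. }
  assert (F1 : Rabs (phi1 l1 (e1 t)) <= (1 + exp R) / l1).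
  { unfold phi1. rewrite Rabs_mult, Rabs_inv, (Rabs_right l1) by lra.
    assert (exp (- e1 t) <= exp R) by (apply exp_le_exp; apply Rabs_le_inv in R1; lra).
    pose proof (exp_pos (- e1 t)).
    assert (Rabs (1 - exp (- e1 t)) <= 1 + exp R) by (unfold Rabs; destruct Rcase_abs; lra).
    unfold Rdiv. rewrite Rmult_comm. apply Rmult_le_compat_r; [left; apply Rinv_0_lt_compat; lra| auto]. }
  assert (F2 : Rabs (phi2 l2 (e2 t)) <= l2 * (exp R + 1)).
  { unfold phi2. rewrite Rabs_mult, (Rabs_right l2) by lra.
    assert (exp (e2 t) <= exp R) by (apply exp_le_exp; apply Rabs_le_inv in R2; lra).
    pose proof (exp_pos (e2 t)).
    assert (Rabs (exp (e2 t) - 1) <= exp R + 1) by (unfold Rabs; destruct Rcase_abs; lra).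
    apply Rmult_le_compat_l; lra. }
  unfold ufb. eapply Rle_trans; [apply Rabs_triang|]. rewrite (Rabs_right us) by lra.
  apply Rplus_le_compat_l. rewrite Rabs_mult. apply Rmult_le_compat_l; [apply Rabs_pos|].
  eapply Rle_trans; [apply Rabs_triang|]. rewrite Rabs_mult, (Rabs_right (1 + eps)) by lra.
  assert ((1 + eps) * Rabs (phi2 l2 (e2 t)) <= (1 + eps) * (l2 * (exp R + 1))) by (apply Rmult_le_compat_l; lra).
  lra.
Qed.

Lemma part_pos l1 l2 us eps beta : 0 < l1 -> 0 < l2 -> 0 < eps -> eps / (4 * (1 + eps)) < beta ->
  forall r, 0 < r ->
     (forall x1 x2, V1 l1 l2 eps x1 x2 <= r -> 0 < ufb l1 l2 us eps beta x1 x2) ->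
     forall e1 e2, is_solution l1 l2 us eps beta e1 e2 ->
       V1 l1 l2 eps (e1 0) (e2 0) <= r ->
       forall t, 0 <= t -> 0 < ufb l1 l2 us eps beta (e1 t) (e2 t).
Proof.
  intros H1 H2 He Hb r Hr Hpos e1 e2 Hs H0 t Ht. apply Hpos.
  pose proof (lyap_sol l1 l2 us eps beta e1 e2 H1 H2 He Hb Hs t Ht). lra.
Qed.

Theorem theorem1 (l1 l2 us eps beta : R) :
  0 < l1 -> 0 < l2 -> 0 < us -> 0 < eps ->
  eps / (4 * (1 + eps)) < beta ->
  GAS l1 l2 us eps beta /\
  LES l1 l2 us eps beta /\
  (forall e1 e2, is_solution l1 l2 us eps beta e1 e2 ->
     exists M, forall t, 0 <= t ->
       Rabs (ufb l1 l2 us eps beta (e1 t) (e2 t)) <= M) /\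
  (forall r, 0 < r ->
     (forall x1 x2, V1 l1 l2 eps x1 x2 <= r -> 0 < ufb l1 l2 us eps beta x1 x2) ->
     forall e1 e2, is_solution l1 l2 us eps beta e1 e2 ->
       V1 l1 l2 eps (e1 0) (e2 0) <= r ->
       forall t, 0 <= t -> 0 < ufb l1 l2 us eps beta (e1 t) (e2 t)).
Proof.
  intros H1 H2 Hus He Hb. split; [| split; [| split]].
  - split; [| split].
    + apply sol_exists; auto.
    + apply part_stab; auto.
    + apply part_conv; auto.
  - apply part_LES; auto.
  - apply part_bnd; auto.
  - apply part_pos; auto.
Qed.
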